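(* Let $f:\mathbb R\to\mathbb R$ be Lipschitz continuous with constant $\lambda>0$ and rpl-approximable. Then for every $\epsilon>0$ there is a rational piecewise linear function $L$ of bitsize polynomial in $\epsilon^{-1}$ such that $L$ is an $\epsilon$-approximation of $f$ and $L$ is Lipschitz continuous with constant $(1+\epsilon)\lambda$.
   Context: A dyadic rational is a rational whose denominator is a power of $2$. Bitsize: for $n\in\mathbb N$, $1$ if $n=0$ and $\lceil\log_2(n+1)\rceil$ otherwise; for $n\in\mathbb Z$, $1$ plus the bitsize of $|n|$; for a reduced dyadic $m/2^\ell$, the bitsize of $m$ plus $\ell+1$. A piecewise linear function $L:\mathbb R\to\mathbb R$ (finitely many pieces, thresholds $t_1<\dots<t_n$, slopes $a_i$ and constants $b_i$ in its unique minimal representation) is rational if all $a_i,b_i,t_i$ are dyadic rationals; its bitsize is the sum of their bitsizes. $g$ is an $\epsilon$-approximation of $f$ if $|f(x)-g(x)|\le\epsilon|f(x)|+\epsilon$ for all $x$. $f$ is rpl-approximable if for every $\epsilon>0$ there is a continuous rational piecewise linear function of bitsize polynomial in $\epsilon^{-1}$ that $\epsilon$-approximates $f$. *)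

(* Defs.v *)
From Stdlib Require Import Reals ZArith List Lra.
Import ListNotations.
Open Scope R_scope.

Record dy := Dy { dnum : Z; dexp : nat }.

Definition dval (d : dy) : R := IZR (dnum d) / 2 ^ (dexp d).

Definition dreduced (d : dy) : Prop := dexp d = 0%nat \/ Z.odd (dnum d) = true.

Definition bs_nat (n : Z) : nat :=
  if Z.eqb n 0 then 1%nat else Z.to_nat (Z.log2_up (n + 1)).

Definition bs_int (m : Z) : nat := S (bs_nat (Z.abs m)).

Definition bs_dy (d : dy) : nat := (bs_int (dnum d) + dexp d + 1)%nat.

(* Representation of a piecewise linear function: thresholds t_1 < ... < t_n
   and n+1 pieces (a_i, b_i) (slope, constant); piece i is used on
   [t_i, t_{i+1}) with t_0 = -oo, t_{n+1} = +oo. *)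
Record plrep := PLRep { thr : list dy; pcs : list (dy * dy) }.

Fixpoint pl_eval_aux (ts : list dy) (ps : list (dy * dy)) (x : R) : R :=
  match ts, ps with
  | t :: ts', (a, b) :: ps' =>
      if Rlt_dec x (dval t) then dval a * x + dval b else pl_eval_aux ts' ps' x
  | [], (a, b) :: _ => dval a * x + dval b
  | _, [] => 0
  end.

Definition pl_eval (r : plrep) (x : R) : R := pl_eval_aux (thr r) (pcs r) x.

Fixpoint strictly_increasing (l : list R) : Prop :=
  match l with
  | x :: ((y :: _) as l') => x < y /\ strictly_increasing l'
  | _ => True
  end.

Fixpoint consecutive_distinct (l : list (dy * dy)) : Prop :=
  match l with
  | (a, b) :: ((((a', b') :: _)) as l') =>
      (dval a <> dval a' \/ dval b <> dval b') /\ consecutive_distinct l'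
  | _ => True
  end.

Definition pl_wf (r : plrep) : Prop :=
  length (pcs r) = S (length (thr r)) /\
  strictly_increasing (map dval (thr r)) /\
  consecutive_distinct (pcs r) /\
  Forall dreduced (thr r) /\
  Forall (fun p => dreduced (fst p) /\ dreduced (snd p)) (pcs r).

Definition pl_bitsize (r : plrep) : nat :=
  (fold_right (fun t s => bs_dy t + s) 0 (thr r) +
   fold_right (fun p s => bs_dy (fst p) + bs_dy (snd p) + s) 0 (pcs r))%nat.

Definition rpl_of_size (L : R -> R) (s : nat) : Prop :=
  exists r : plrep, pl_wf r /\ (forall x, L x = pl_eval r x) /\ (pl_bitsize r <= s)%nat.

Definition eps_approx (eps : R) (f g : R -> R) : Prop :=
  forall x, Rabs (f x - g x) <= eps * Rabs (f x) + eps.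

Definition lipschitz (lam : R) (f : R -> R) : Prop :=
  forall x y, Rabs (f x - f y) <= lam * Rabs (x - y).

(* "bitsize polynomial in 1/eps": bounded by c * (1 + 1/eps)^k *)
Definition rpl_approximable (f : R -> R) : Prop :=
  exists c k : nat, forall eps, 0 < eps ->
    exists (L : R -> R) (s : nat),
      continuity L /\ rpl_of_size L s /\ INR s <= INR c * (1 + / eps) ^ k /\
      eps_approx eps f L.

(* Main.v *)
Require Import Defs.
From Stdlib Require Import Reals ZArith Lra Lia List Psatz Classical.
Import ListNotations.
Open Scope R_scope.


Definition dadd (d1 d2 : dy) : dy :=
  Dy (dnum d1 * 2 ^ Z.of_nat (dexp d2) + dnum d2 * 2 ^ Z.of_nat (dexp d1))%Z
     (dexp d1 + dexp d2).
Definition dmul (d1 d2 : dy) : dy := Dy (dnum d1 * dnum d2)%Z (dexp d1 + dexp d2).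
Definition dneg (d : dy) : dy := Dy (- dnum d)%Z (dexp d).
Definition dsub (d1 d2 : dy) : dy := dadd d1 (dneg d2).

Lemma IZR_pow2 (n : nat) : IZR (2 ^ Z.of_nat n) = 2 ^ n.
Proof. rewrite <- pow_IZR. reflexivity. Qed.

Lemma pow2_pos (n : nat) : 0 < 2 ^ n.
Proof. apply pow_lt; lra. Qed.

Lemma dval_add d1 d2 : dval (dadd d1 d2) = dval d1 + dval d2.
Proof.
  unfold dval, dadd; simpl. rewrite plus_IZR, !mult_IZR, !IZR_pow2, pow_add.
  pose proof (pow2_pos (dexp d1)); pose proof (pow2_pos (dexp d2)).
  field; lra.
Qed.

Lemma dval_mul d1 d2 : dval (dmul d1 d2) = dval d1 * dval d2.
Proof.
  unfold dval, dmul; simpl. rewrite mult_IZR, pow_add.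
  pose proof (pow2_pos (dexp d1)); pose proof (pow2_pos (dexp d2)).
  field; lra.
Qed.

Lemma dval_neg d : dval (dneg d) = - dval d.
Proof. unfold dval, dneg; simpl. rewrite opp_IZR. lra. Qed.

Lemma dval_sub d1 d2 : dval (dsub d1 d2) = dval d1 - dval d2.
Proof. unfold dsub. rewrite dval_add, dval_neg. lra. Qed.

Definition Bnd (B : nat) (d : dy) : Prop :=
  (Z.abs (dnum d) <= 2 ^ Z.of_nat B)%Z /\ (dexp d <= B)%nat.

Lemma Zpow2_mono (a b : nat) : (a <= b)%nat -> (2 ^ Z.of_nat a <= 2 ^ Z.of_nat b)%Z.
Proof. intros; apply Z.pow_le_mono_r; lia. Qed.

Lemma Zpow2_pos (a : nat) : (0 < 2 ^ Z.of_nat a)%Z.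
Proof. apply Z.pow_pos_nonneg; lia. Qed.

Lemma Bnd_mono B B' d : (B <= B')%nat -> Bnd B d -> Bnd B' d.
Proof.
  intros H [H1 H2]; split; [|lia].
  eapply Z.le_trans; [eauto|]. apply Zpow2_mono; lia.
Qed.

Lemma Bnd_neg B d : Bnd B d -> Bnd B (dneg d).
Proof. intros [H1 H2]; split; simpl; [rewrite Z.abs_opp|]; auto. Qed.

Lemma Bnd_mul B d1 d2 : Bnd B d1 -> Bnd B d2 -> Bnd (2 * B) (dmul d1 d2).
Proof.
  intros [H1 H2] [H3 H4]; split; simpl; [|lia].
  rewrite Z.abs_mul.
  replace (Z.of_nat (B + (B + 0))) with (Z.of_nat B + Z.of_nat B)%Z by lia.
  rewrite Z.pow_add_r by lia.
  apply Z.mul_le_mono_nonneg; auto; apply Z.abs_nonneg.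
Qed.

Lemma Bnd_add B d1 d2 : Bnd B d1 -> Bnd B d2 -> Bnd (2 * B + 1) (dadd d1 d2).
Proof.
  intros [H1 H2] [H3 H4]; split; simpl; [|lia].
  eapply Z.le_trans; [apply Z.abs_triangle|].
  rewrite !Z.abs_mul.
  rewrite (Z.abs_eq (2 ^ Z.of_nat (dexp d2))) by (pose proof (Zpow2_pos (dexp d2)); lia).
  rewrite (Z.abs_eq (2 ^ Z.of_nat (dexp d1))) by (pose proof (Zpow2_pos (dexp d1)); lia).
  replace (Z.of_nat (B + (B + 0) + 1)) with (Z.of_nat B + Z.of_nat B + 1)%Z by lia.
  rewrite !Z.pow_add_r by lia.
  pose proof (Zpow2_mono _ _ H2); pose proof (Zpow2_mono _ _ H4).
  pose proof (Zpow2_pos B).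
  assert (Z.abs (dnum d1) * 2 ^ Z.of_nat (dexp d2) <= 2 ^ Z.of_nat B * 2 ^ Z.of_nat B)%Z
    by (apply Z.mul_le_mono_nonneg; auto; try apply Z.abs_nonneg; pose proof (Zpow2_pos (dexp d2)); lia).
  assert (Z.abs (dnum d2) * 2 ^ Z.of_nat (dexp d1) <= 2 ^ Z.of_nat B * 2 ^ Z.of_nat B)%Z
    by (apply Z.mul_le_mono_nonneg; auto; try apply Z.abs_nonneg; pose proof (Zpow2_pos (dexp d1)); lia).
  simpl Z.pow at 3. lia.
Qed.

Lemma Bnd_sub B d1 d2 : Bnd B d1 -> Bnd B d2 -> Bnd (2 * B + 1) (dsub d1 d2).
Proof. intros; apply Bnd_add; auto; apply Bnd_neg; auto. Qed.

Lemma Rabs_divp a b : 0 < b -> Rabs (a / b) = Rabs a / b.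
Proof.
  intros Hb. unfold Rdiv. rewrite Rabs_mult. f_equal.
  apply Rabs_right. left. apply Rinv_0_lt_compat; auto.
Qed.

Lemma Bnd_abs B d : Bnd B d -> Rabs (dval d) <= 2 ^ B.
Proof.
  intros [H1 H2]. unfold dval.
  pose proof (pow2_pos (dexp d)).
  rewrite Rabs_divp by lra.
  apply Rle_trans with (Rabs (IZR (dnum d))).
  - unfold Rdiv. rewrite <- (Rmult_1_r (Rabs _)) at 2.
    apply Rmult_le_compat_l; [apply Rabs_pos|].
    rewrite <- Rinv_1. apply Rinv_le_contravar; [lra|].
    clear. induction (dexp d); simpl; lra.
  - rewrite <- abs_IZR, <- IZR_pow2. apply IZR_le; auto.
Qed.

Lemma Bnd_sep B d1 d2 : Bnd B d1 -> Bnd B d2 -> dval d1 <> dval d2 ->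
  / 2 ^ (2 * B) <= Rabs (dval d1 - dval d2).
Proof.
  intros [H1 H2] [H3 H4] Hne.
  set (n := (dnum d1 * 2 ^ Z.of_nat (dexp d2) + - dnum d2 * 2 ^ Z.of_nat (dexp d1))%Z).
  assert (Heq : dval d1 - dval d2 = IZR n / 2 ^ (dexp d1 + dexp d2)).
  { rewrite <- dval_sub. reflexivity. }
  assert (n <> 0%Z).
  { intro Hn. apply Hne. rewrite Hn in Heq. unfold Rdiv in Heq. rewrite Rmult_0_l in Heq. lra. }
  rewrite Heq.
  pose proof (pow2_pos (dexp d1 + dexp d2)).
  rewrite Rabs_divp by lra.
  assert (1 <= Rabs (IZR n)).
  { rewrite <- abs_IZR. apply IZR_le. lia. }
  apply Rle_trans with (1 / 2 ^ (dexp d1 + dexp d2)).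
  - unfold Rdiv; rewrite Rmult_1_l. apply Rinv_le_contravar; auto.
    apply Rle_pow; lra || lia.
  - unfold Rdiv. apply Rmult_le_compat_r; [left; apply Rinv_0_lt_compat; auto| auto].
Qed.

Lemma bs_nat_le (n : Z) (B : nat) : (0 <= n)%Z -> (n <= 2 ^ Z.of_nat B)%Z -> (bs_nat n <= B + 1)%nat.
Proof.
  intros H0 H1. unfold bs_nat. destruct (Z.eqb_spec n 0); [lia|].
  assert (Z.log2_up (n + 1) <= Z.of_nat B + 1)%Z.
  { apply Z.log2_up_le_pow2; [lia|]. rewrite Z.pow_add_r by lia.
    pose proof (Zpow2_pos B). lia. }
  lia.
Qed.

Lemma bs_dy_Bnd B d : Bnd B d -> (bs_dy d <= 2 * B + 3)%nat.
Proof.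
  intros [H1 H2]. unfold bs_dy, bs_int.
  pose proof (bs_nat_le (Z.abs (dnum d)) B (Z.abs_nonneg _) H1). lia.
Qed.

Lemma Bnd_of_bs s d : (bs_dy d <= s)%nat -> Bnd s d.
Proof.
  intros H. unfold bs_dy, bs_int in H. split; [|lia].
  unfold bs_nat in H. destruct (Z.eqb_spec (Z.abs (dnum d)) 0).
  - rewrite e. pose proof (Zpow2_pos s). lia.
  - assert (Z.log2_up (Z.abs (dnum d) + 1) <= Z.of_nat s)%Z.
    { assert (0 <= Z.log2_up (Z.abs (dnum d) + 1))%Z by apply Z.log2_up_nonneg. lia. }
    apply Z.log2_up_le_pow2 in H0; [lia|]. pose proof (Z.abs_nonneg (dnum d)); lia.
Qed.

Fixpoint red_aux (e : nat) (n : Z) : dy :=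
  match e with
  | O => Dy n O
  | S e' => if Z.even n then red_aux e' (Z.div2 n) else Dy n (S e')
  end.
Definition rd (d : dy) : dy := red_aux (dexp d) (dnum d).

Lemma red_aux_prop e : forall n,
  dval (red_aux e n) = IZR n / 2 ^ e /\ dreduced (red_aux e n) /\
  (Z.abs (dnum (red_aux e n)) <= Z.abs n)%Z /\ (dexp (red_aux e n) <= e)%nat.
Proof.
  induction e; intros n; simpl.
  - unfold dval, dreduced; simpl. repeat split; auto; lia.
  - destruct (Z.even n) eqn:He.
    + destruct (IHe (Z.div2 n)) as [A [B [C D]]].
      assert (Hn : n = (2 * Z.div2 n)%Z).
      { rewrite (Z.div2_odd n) at 1. rewrite <- Z.negb_even, He. simpl. lia. }
      split; [|split; [auto|split; lia]].
      rewrite A. rewrite Hn at 2. rewrite mult_IZR. simpl.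
      pose proof (pow2_pos e). field. lra.
    + unfold dval, dreduced; simpl. repeat split; try lia.
      right. rewrite <- Z.negb_even, He. reflexivity.
Qed.

Lemma dval_rd d : dval (rd d) = dval d.
Proof. unfold rd. destruct (red_aux_prop (dexp d) (dnum d)) as [A _]. rewrite A. reflexivity. Qed.
Lemma rd_reduced d : dreduced (rd d).
Proof. unfold rd. destruct (red_aux_prop (dexp d) (dnum d)) as [_ [A _]]. auto. Qed.
Lemma Bnd_rd B d : Bnd B d -> Bnd B (rd d).
Proof.
  unfold rd. destruct (red_aux_prop (dexp d) (dnum d)) as [_ [_ [A C]]].
  intros [H1 H2]; split; lia.
Qed.


Definition ev (u : dy * dy) (x : R) : R := dval (fst u) * x + dval (snd u).

Definition above (lo : option R) (x : R) : Prop :=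
  match lo with None => True | Some a => a <= x end.
Definition below (hi : option R) (x : R) : Prop :=
  match hi with None => True | Some b => x < b end.
Definition sabove (lo : option R) (x : R) : Prop :=
  match lo with None => True | Some a => a < x end.

Definition affine_on (L : R -> R) (P : dy * dy -> Prop) (lo hi : option R) : Prop :=
  exists u, P u /\ forall x, above lo x -> below hi x -> L x = ev u x.

Fixpoint condL (L : R -> R) (P : dy * dy -> Prop) (lo : option R) (Sl : list dy) : Prop :=
  match Sl with
  | [] => affine_on L P lo None
  | s :: S' => affine_on L P lo (Some (dval s)) /\ condL L P (Some (dval s)) S'
  end.

Lemma build L P Sl : forall lo, condL L P lo Sl ->
  exists ps, length ps = S (length Sl) /\ Forall P ps /\
    forall x, above lo x -> L x = pl_eval_aux Sl ps x.
Proof.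
  induction Sl as [|s Sl IH]; intros lo H; simpl in H.
  - destruct H as [u [Pu Hu]]. exists [u]. repeat split; auto.
    intros x Hx. destruct u as [a b]. simpl. rewrite Hu; auto. exact I.
  - destruct H as [[u [Pu Hu]] H2]. destruct (IH _ H2) as [ps [A [B C]]].
    exists (u :: ps). split; [simpl; lia|]. split; [constructor; auto|].
    intros x Hx. destruct u as [a b]. simpl.
    destruct (Rlt_dec x (dval s)).
    + rewrite Hu; auto.
    + apply C. simpl. lra.
Qed.

Lemma SI_cons (x : R) l : strictly_increasing (x :: l) <->
  (forall y, In y l -> x < y) /\ strictly_increasing l.
Proof.
  revert x; induction l as [|y l IH]; intros x; simpl.
  - split; [intros _; split; [tauto|exact I] | intros; exact I].
  - split.
    + intros [H1 H2]. split; auto. apply IH in H2. destruct H2 as [H3 _].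
      intros z [<-|Hz]; auto. specialize (H3 z Hz). lra.
    + intros [H1 H2]. split; auto.
Qed.

Definition sameline (u v : dy * dy) : bool :=
  if Req_dec_T (dval (fst u)) (dval (fst v)) then
    if Req_dec_T (dval (snd u)) (dval (snd v)) then true else false
  else false.

Fixpoint merge (ts : list dy) (ps : list (dy * dy)) : list dy * list (dy * dy) :=
  match ts, ps with
  | t :: ts', u :: ps' =>
      let (ts2, ps2) := merge ts' ps' in
      match ps2 with
      | v :: _ => if sameline u v then (ts2, ps2) else (t :: ts2, u :: ps2)
      | [] => (t :: ts2, u :: ps2)
      end
  | _, _ => (ts, ps)
  end.

Lemma eval_below ts v ps x : (forall y, In y ts -> x < dval y) ->
  pl_eval_aux ts (v :: ps) x = ev v x.
Proof.
  intros H. destruct v as [a b]. destruct ts as [|t ts]; simpl; auto.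
  destruct (Rlt_dec x (dval t)); auto. exfalso. apply n. apply H. left; auto.
Qed.

Lemma merge_prop ts : forall ps, length ps = S (length ts) ->
  strictly_increasing (map dval ts) ->
  let m := merge ts ps in
  length (snd m) = S (length (fst m)) /\
  (length (fst m) <= length ts)%nat /\
  (forall t, In t (fst m) -> In t ts) /\
  (forall u, In u (snd m) -> In u ps) /\
  strictly_increasing (map dval (fst m)) /\
  consecutive_distinct (snd m) /\
  (forall x, pl_eval_aux (fst m) (snd m) x = pl_eval_aux ts ps x).
Proof.
  induction ts as [|t ts IH]; intros ps Hl Hs.
  - destruct ps as [|u ps]; [simpl in Hl; lia|]. destruct ps; [|simpl in Hl; lia].
    destruct u as [a b]. simpl. repeat split; auto.
  - destruct ps as [|u ps]; [simpl in Hl; lia|]. simpl in Hl.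
    simpl map in Hs. apply SI_cons in Hs. destruct Hs as [Hs1 Hs2].
    destruct (IH ps ltac:(lia) Hs2) as [A [B [C [D [E [F G]]]]]].
    simpl. destruct (merge ts ps) as [ts2 ps2] eqn:Hm. simpl in *.
    destruct ps2 as [|v ps3]; [simpl in A; lia|].
    destruct (sameline u v) eqn:Hsame.
    + simpl. repeat split; auto; try lia.
      * intros x. destruct u as [a b]. destruct (Rlt_dec x (dval t)).
        -- rewrite eval_below.
           ++ unfold sameline in Hsame. unfold ev.
              destruct (Req_dec_T (dval (fst (a, b))) (dval (fst v))); [|discriminate].
              destruct (Req_dec_T (dval (snd (a, b))) (dval (snd v))); [|discriminate].
              simpl in *. rewrite <- e, <- e0. reflexivity.
           ++ intros y Hy. apply C in Hy. specialize (Hs1 (dval y) (in_map _ _ _ Hy)). lra.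
        -- rewrite G. reflexivity.
    + simpl. repeat split; auto; try lia.
      * intros t0 [<-|Ht0]; auto.
      * intros u0 [<-|Hu0]; auto.
      * apply SI_cons. split; auto. intros y Hy. apply in_map_iff in Hy.
        destruct Hy as [d [<- Hd]]. apply C in Hd. apply Hs1. apply in_map; auto.
      * destruct u as [a b]; destruct v as [a' b']. simpl.
        split; [|exact F].
        unfold sameline in Hsame; simpl in Hsame.
        destruct (Req_dec_T (dval a) (dval a')); [|left; auto].
        destruct (Req_dec_T (dval b) (dval b')); [discriminate|right; auto].
      * intros x. destruct u as [a b]. simpl. destruct (Rlt_dec x (dval t)); auto.
Qed.

Definition rdp (u : dy * dy) : dy * dy := (rd (fst u), rd (snd u)).

Lemma eval_rd ts : forall ps x, pl_eval_aux (map rd ts) (map rdp ps) x = pl_eval_aux ts ps x.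
Proof.
  induction ts as [|t ts IH]; intros ps x; destruct ps as [|[a b] ps]; simpl; auto.
  - rewrite !dval_rd. reflexivity.
  - rewrite !dval_rd. destruct (Rlt_dec x (dval t)); auto.
Qed.

Lemma map_dval_rd ts : map dval (map rd ts) = map dval ts.
Proof. induction ts; simpl; auto. rewrite dval_rd, IHts; auto. Qed.

Definition PB (B : nat) (u : dy * dy) : Prop := Bnd B (fst u) /\ Bnd B (snd u).

Lemma bitsize_bound B ts ps : Forall (Bnd B) ts -> Forall (PB B) ps ->
  (pl_bitsize (PLRep ts ps) <= length ts * (2 * B + 3) + length ps * (2 * (2 * B + 3)))%nat.
Proof.
  intros H1 H2. unfold pl_bitsize; cbn [thr pcs].
  assert (fold_right (fun t s => (bs_dy t + s)%nat) 0%nat ts <= length ts * (2 * B + 3))%nat.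
  { clear H2. induction H1 as [|x l Hx Hl IHl]; cbn [fold_right length]; [lia|]. pose proof (bs_dy_Bnd _ _ Hx). lia. }
  assert (fold_right (fun p s => (bs_dy (fst p) + bs_dy (snd p) + s)%nat) 0%nat ps
          <= length ps * (2 * (2 * B + 3)))%nat.
  { clear H1 H. induction H2 as [|x l Hx Hl IHl]; cbn [fold_right length]; [lia|]. destruct Hx as [Ha Hb].
    pose proof (bs_dy_Bnd _ _ Ha). pose proof (bs_dy_Bnd _ _ Hb). lia. }
  lia.
Qed.

Lemma rep_of L Sl B : strictly_increasing (map dval Sl) -> Forall (Bnd B) Sl ->
  condL L (PB B) None Sl ->
  rpl_of_size L ((3 * length Sl + 2) * (2 * B + 3)).
Proof.
  intros Hs Hb Hc.
  destruct (build L (PB B) Sl None Hc) as [ps [Hl [Hp He]]].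
  set (ts1 := map rd Sl). set (ps1 := map rdp ps).
  assert (Hl1 : length ps1 = S (length ts1)) by (unfold ps1, ts1; rewrite !length_map; auto).
  assert (Hs1 : strictly_increasing (map dval ts1)) by (unfold ts1; rewrite map_dval_rd; auto).
  destruct (merge_prop ts1 ps1 Hl1 Hs1) as [A [B' [C [D [E [F G]]]]]].
  destruct (merge ts1 ps1) as [ts2 ps2] eqn:Hm. simpl in *.
  exists (PLRep ts2 ps2). split; [|split].
  - unfold pl_wf; simpl. repeat split; auto.
    + apply Forall_forall. intros t Ht. apply C in Ht. unfold ts1 in Ht.
      apply in_map_iff in Ht. destruct Ht as [d [<- _]]. apply rd_reduced.
    + apply Forall_forall. intros u Hu. apply D in Hu. unfold ps1 in Hu.
      apply in_map_iff in Hu. destruct Hu as [d [<- _]]. split; apply rd_reduced.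
  - intros x. unfold pl_eval; simpl. rewrite G. unfold ts1, ps1. rewrite eval_rd.
    apply He. exact I.
  - eapply Nat.le_trans; [apply (bitsize_bound B)|].
    + apply Forall_forall. intros t Ht. apply C in Ht. unfold ts1 in Ht.
      apply in_map_iff in Ht. destruct Ht as [d [<- Hd]]. apply Bnd_rd.
      rewrite Forall_forall in Hb. auto.
    + apply Forall_forall. intros u Hu. apply D in Hu. unfold ps1 in Hu.
      apply in_map_iff in Hu. destruct Hu as [d [<- Hd]].
      rewrite Forall_forall in Hp. destruct (Hp d Hd). split; apply Bnd_rd; auto.
    + assert (length ts1 = length Sl) by (unfold ts1; rewrite length_map; auto).
      rewrite A. nia.
Qed.


Definition grp : Type := ((dy * dy) * list (dy * dy))%type.
Definition glines (g : grp) : list (dy * dy) := fst g :: snd g.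
Definition maxg (g : grp) (x : R) : R :=
  fold_right (fun v acc => Rmax (ev v x) acc) (ev (fst g) x) (snd g).

Definition Hf (gl : list grp) (x : R) : R :=
  match gl with
  | [] => 0
  | g :: gs => fold_right (fun g' acc => Rmin (maxg g' x) acc) (maxg g x) gs
  end.

Lemma maxg_ge g v x : In v (glines g) -> ev v x <= maxg g x.
Proof.
  destruct g as [u vs]. unfold glines, maxg; simpl. induction vs as [|w vs IH]; simpl.
  - intros [<-|[]]. lra.
  - intros [<-|[<-|H]].
    + eapply Rle_trans; [apply IH; left; auto|apply Rmax_r].
    + apply Rmax_l.
    + eapply Rle_trans; [apply IH; right; auto|apply Rmax_r].
Qed.

Lemma maxg_att g x : exists v, In v (glines g) /\ maxg g x = ev v x.
Proof.
  destruct g as [u vs]. unfold glines, maxg; simpl. induction vs as [|w vs IH]; simpl.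
  - exists u; auto.
  - destruct IH as [v [Hv Hv']]. unfold Rmax. destruct (Rle_dec (ev w x) _).
    + exists v. split; [tauto|auto].
    + exists w. auto.
Qed.

Lemma maxg_le g x c : (forall v, In v (glines g) -> ev v x <= c) -> maxg g x <= c.
Proof.
  intros H. destruct (maxg_att g x) as [v [Hv ->]]. auto.
Qed.

Lemma Hf_le gl g x : In g gl -> Hf gl x <= maxg g x.
Proof.
  destruct gl as [|g0 gs]; [intros []|]. simpl.
  induction gs as [|g1 gs IH]; simpl.
  - intros [<-|[]]. lra.
  - intros [<-|[<-|H]].
    + eapply Rle_trans; [apply Rmin_r|apply IH; left; auto].
    + apply Rmin_l.
    + eapply Rle_trans; [apply Rmin_r|apply IH; right; auto].
Qed.

Lemma Hf_att gl x : gl <> [] -> exists g, In g gl /\ Hf gl x = maxg g x.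
Proof.
  destruct gl as [|g0 gs]; [tauto|]. intros _. simpl.
  induction gs as [|g1 gs IH]; simpl.
  - exists g0; auto.
  - destruct IH as [g [Hg Hg']]. unfold Rmin. destruct (Rle_dec (maxg g1 x) _).
    + exists g1. auto.
    + exists g. split; [simpl in *; tauto|auto].
Qed.

Definition pool (gl : list grp) : list (dy * dy) := flat_map glines gl.

Lemma Hf_line gl x : gl <> [] -> exists v, In v (pool gl) /\ Hf gl x = ev v x.
Proof.
  intros H. destruct (Hf_att gl x H) as [g [Hg ->]].
  destruct (maxg_att g x) as [v [Hv ->]]. exists v. split; auto.
  unfold pool. apply in_flat_map. eauto.
Qed.

Lemma lip_max a b c d K : Rabs (a - c) <= K -> Rabs (b - d) <= K -> Rabs (Rmax a b - Rmax c d) <= K.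
Proof. intros. unfold Rmax. destruct (Rle_dec a b), (Rle_dec c d); split_Rabs; lra. Qed.
Lemma lip_min a b c d K : Rabs (a - c) <= K -> Rabs (b - d) <= K -> Rabs (Rmin a b - Rmin c d) <= K.
Proof. intros. unfold Rmin. destruct (Rle_dec a b), (Rle_dec c d); split_Rabs; lra. Qed.

Lemma ev_lip v x y Lam : Rabs (dval (fst v)) <= Lam -> Rabs (ev v x - ev v y) <= Lam * Rabs (x - y).
Proof.
  intros H. unfold ev. replace (dval (fst v) * x + dval (snd v) - (dval (fst v) * y + dval (snd v)))
    with (dval (fst v) * (x - y)) by ring. rewrite Rabs_mult.
  apply Rmult_le_compat_r; auto. apply Rabs_pos.
Qed.

Lemma maxg_lip g Lam x y : (forall v, In v (glines g) -> Rabs (dval (fst v)) <= Lam) ->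
  Rabs (maxg g x - maxg g y) <= Lam * Rabs (x - y).
Proof.
  destruct g as [u vs]. unfold glines, maxg; simpl. intros H.
  induction vs as [|w vs IH]; simpl.
  - apply ev_lip. auto.
  - apply lip_max.
    + apply ev_lip. apply H. right; left; auto.
    + apply IH. intros v [<-|Hv]; apply H; auto. right; right; auto.
Qed.

Lemma Hf_lip gl Lam x y : 0 <= Lam -> (forall v, In v (pool gl) -> Rabs (dval (fst v)) <= Lam) ->
  Rabs (Hf gl x - Hf gl y) <= Lam * Rabs (x - y).
Proof.
  intros H0 H. assert (Hg : forall g, In g gl -> Rabs (maxg g x - maxg g y) <= Lam * Rabs (x - y)).
  { intros g Hg. apply maxg_lip. intros v Hv. apply H. unfold pool. apply in_flat_map; eauto. }
  clear H. destruct gl as [|g0 gs]; simpl.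
  - rewrite Rminus_0_r, Rabs_R0. apply Rmult_le_pos; [|apply Rabs_pos].
    auto.
  - induction gs as [|g1 gs IH]; simpl.
    + apply Hg; left; auto.
    + apply lip_min.
      * apply Hg. right; left; auto.
      * apply IH. intros g Hgg. apply Hg. simpl in *; tauto.
Qed.

Definition zlist (v w : dy * dy) : list R :=
  if Req_dec_T (dval (fst v)) (dval (fst w)) then []
  else [(dval (snd w) - dval (snd v)) / (dval (fst v) - dval (fst w))].
Definition Zs (gl : list grp) : list R :=
  flat_map (fun v => flat_map (fun w => zlist v w) (pool gl)) (pool gl).

Lemma cross v w x1 x2 : ev v x1 < ev w x1 -> ev w x2 < ev v x2 ->
  exists z, In z (zlist v w) /\ Rmin x1 x2 < z < Rmax x1 x2.
Proof.
  intros H1 H2. unfold zlist, ev in *.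
  set (a := dval (fst v)) in *. set (a' := dval (fst w)) in *.
  set (b := dval (snd v)) in *. set (b' := dval (snd w)) in *.
  destruct (Req_dec_T a a') as [E|E].
  - exfalso. rewrite E in *. lra.
  - set (z := (b' - b) / (a - a')). exists z. split; [left; auto|].
    assert (Hd : a - a' <> 0) by lra.
    assert (K1 : (a - a') * (x1 - z) < 0).
    { unfold z. replace ((a - a') * (x1 - (b' - b) / (a - a'))) with (a * x1 + b - (a' * x1 + b')) by (field; auto). lra. }
    assert (K2 : (a - a') * (x2 - z) > 0).
    { unfold z. replace ((a - a') * (x2 - (b' - b) / (a - a'))) with (a * x2 + b - (a' * x2 + b')) by (field; auto). lra. }
    unfold Rmin, Rmax. destruct (Rle_dec x1 x2); destruct (Rlt_dec 0 (a - a')); nra.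
Qed.

Definition seg (lo hi : option R) (x : R) : Prop := above lo x /\ below hi x.
Definition NoZ (gl : list grp) (lo hi : option R) : Prop :=
  forall z, In z (Zs gl) -> ~ (sabove lo z /\ below hi z).

Lemma UC gl lo hi v w : NoZ gl lo hi -> In v (pool gl) -> In w (pool gl) ->
  (forall x, seg lo hi x -> ev v x <= ev w x) \/ (forall x, seg lo hi x -> ev w x <= ev v x).
Proof.
  intros HN Hv Hw. destruct (classic (forall x, seg lo hi x -> ev v x <= ev w x)) as [H|H]; [left; auto|right].
  apply not_all_ex_not in H. destruct H as [x1 H]. apply imply_to_and in H. destruct H as [Hx1 H].
  apply Rnot_le_lt in H. intros x2 Hx2. apply Rnot_lt_le. intros H2.
  destruct (cross v w x2 x1 H2 H) as [z [Hz [Hz1 Hz2]]].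
  apply (HN z).
  - unfold Zs. apply in_flat_map. exists v. split; auto. apply in_flat_map. exists w. auto.
  - destruct Hx1 as [A1 B1], Hx2 as [A2 B2]. split.
    + destruct lo as [l|]; simpl in *; auto. unfold Rmin in Hz1. destruct (Rle_dec x2 x1); lra.
    + destruct hi as [h|]; simpl in *; auto. unfold Rmax in Hz2. destruct (Rle_dec x2 x1); lra.
Qed.

Lemma pool_sub gl1 gl2 v : (forall g, In g gl1 -> In g gl2) -> In v (pool gl1) -> In v (pool gl2).
Proof.
  intros H Hv. unfold pool in *. apply in_flat_map in Hv. destruct Hv as [g [Hg Hv]].
  apply in_flat_map. eauto.
Qed.

Lemma seg_line gl lo hi : gl <> [] -> NoZ gl lo hi ->
  exists u, In u (pool gl) /\ forall x, seg lo hi x -> Hf gl x = ev u x.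
Proof.
  intros Hne HN.
  assert (Hg : forall g, In g gl -> exists u, In u (glines g) /\ forall x, seg lo hi x -> maxg g x = ev u x).
  { intros [u vs] Hgin.
    assert (Hp : forall v, In v (glines (u, vs)) -> In v (pool gl))
      by (intros v Hv; unfold pool; apply in_flat_map; eauto).
    unfold glines in Hp. unfold glines, maxg. simpl in *. clear Hgin.
    induction vs as [|w vs IH]; simpl.
    - exists u. split; auto.
    - destruct IH as [v [Hv Hv']].
      { intros v Hv. apply Hp. simpl in *; tauto. }
      destruct (UC gl lo hi w v HN) as [C|C].
      + apply Hp. simpl; auto.
      + apply Hp. simpl in *; tauto.
      + exists v. split; [simpl in *; tauto|]. intros x Hx. rewrite Hv' by auto.
        apply Rmax_right. auto.
      + exists w. split; [simpl; auto|]. intros x Hx. rewrite Hv' by auto.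
        apply Rmax_left. auto. }
  destruct gl as [|g0 gs]; [tauto|]. clear Hne. simpl.
  assert (Hp : forall g u, In g (g0 :: gs) -> In u (glines g) -> In u (pool (g0 :: gs)))
    by (intros g u Hg1 Hu; unfold pool; apply in_flat_map; eauto).
  induction gs as [|g1 gs IH]; simpl.
  - destruct (Hg g0) as [u [Hu Hu']]; [left; auto|]. exists u. split; [eapply Hp; eauto; left; auto|auto].
  - destruct IH as [v [Hv Hv']].
    + intros z Hz. apply HN. unfold Zs, pool in *. 
      apply in_flat_map in Hz. destruct Hz as [a [Ha Hz]]. apply in_flat_map in Hz. destruct Hz as [b [Hb Hz]].
      apply in_flat_map. exists a. split.
      * apply in_flat_map in Ha. destruct Ha as [g [Hgg Ha]]. apply in_flat_map. exists g. simpl in *; split; [tauto|auto].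
      * apply in_flat_map. exists b. split; auto.
        apply in_flat_map in Hb. destruct Hb as [g [Hgg Hb]]. apply in_flat_map. exists g. simpl in *; split; [tauto|auto].
    + intros g Hgg. apply Hg. simpl in *; tauto.
    + intros g u Hgg Hu. unfold pool. apply in_flat_map. eauto.
    + destruct (Hg g1) as [w [Hw Hw']]; [simpl; auto|].
      assert (Hwp : In w (pool (g0 :: g1 :: gs))) by (eapply Hp; eauto; simpl; auto).
      assert (Hvp : In v (pool (g0 :: g1 :: gs))).
      { change (In v (pool (g0 :: gs))) in Hv. eapply pool_sub; [|exact Hv]. intros g Hgg. simpl in *; tauto. }
      destruct (UC _ lo hi w v HN Hwp Hvp) as [C|C].
      * exists w. split; auto. intros x Hx. rewrite Hw', Hv' by auto. apply Rmin_left. auto.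
      * exists v. split; auto. intros x Hx. rewrite Hw', Hv' by auto. apply Rmin_right. auto.
Qed.


Definition dzero : dy := Dy 0 0.
Definition valat (u : dy * dy) (t : dy) : dy := dadd (dmul (fst u) t) (snd u).
Definition Rline (Lm t v : dy) : dy * dy := (Lm, dsub v (dmul Lm t)).
Definition Lline (Lm t v : dy) : dy * dy := (dneg Lm, dadd v (dmul Lm t)).
Definition cone (Lm t v : dy) : grp := (Rline Lm t v, [Lline Lm t v]).

Lemma dval_valat u t : dval (valat u t) = ev u (dval t).
Proof. unfold valat, ev. rewrite dval_add, dval_mul. reflexivity. Qed.
Lemma ev_Rline Lm t v x : ev (Rline Lm t v) x = dval v + dval Lm * (x - dval t).
Proof. unfold ev, Rline; simpl. rewrite dval_sub, dval_mul. ring. Qed.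
Lemma ev_Lline Lm t v x : ev (Lline Lm t v) x = dval v - dval Lm * (x - dval t).
Proof. unfold ev, Lline; simpl. rewrite dval_add, dval_neg, dval_mul. ring. Qed.

Definition group (Lm : dy) (lo hi : option dy) (u : dy * dy) : grp :=
  if Rle_dec (Rabs (dval (fst u))) (dval Lm) then
    (u, match hi with Some t => [Rline Lm t (valat u t)] | None => [] end ++
        match lo with Some t => [Lline Lm t (valat u t)] | None => [] end)
  else if Rlt_dec 0 (dval (fst u)) then
    let c := match lo with Some t => t | None => match hi with Some t => t | None => dzero end end in
    cone Lm c (valat u c)
  else
    let c := match hi with Some t => t | None => match lo with Some t => t | None => dzero end end in
    cone Lm c (valat u c).

Fixpoint groups (Lm : dy) (lo : option dy) (ts : list dy) (ps : list (dy * dy)) : list grp :=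
  match ts, ps with
  | t :: ts', u :: ps' => group Lm lo (Some t) u :: groups Lm (Some t) ts' ps'
  | [], u :: _ => [group Lm lo None u]
  | _, [] => []
  end.

Definition odv (o : option dy) : option R := option_map dval o.

Lemma cone_val Lm t v x : 0 <= dval Lm ->
  dval v + dval Lm * Rabs (x - dval t) <= maxg (cone Lm t v) x.
Proof.
  intros HL. destruct (Rle_dec (dval t) x).
  - eapply Rle_trans; [|apply maxg_ge with (v := Rline Lm t v); simpl; auto].
    rewrite ev_Rline. rewrite Rabs_right by lra. lra.
  - eapply Rle_trans; [|apply maxg_ge with (v := Lline Lm t v); simpl; auto].
    rewrite ev_Lline. rewrite Rabs_left by lra. lra.
Qed.

Definition closure (lo hi : option R) (y : R) : Prop :=
  above lo y /\ match hi with None => True | Some h => y <= h end.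

Definition ordered (lo hi : option R) : Prop :=
  match lo, hi with Some l, Some h => l < h | _, _ => True end.

Lemma group_low Lm lo hi u x : 0 <= dval Lm -> ordered (odv lo) (odv hi) ->
  exists y0, closure (odv lo) (odv hi) y0 /\
    ev u y0 + dval Lm * Rabs (x - y0) <= maxg (group Lm lo hi u) x.
Proof.
  intros HL Hord. unfold group.
  destruct (Rle_dec (Rabs (dval (fst u))) (dval Lm)) as [Hs|Hs].
  - destruct lo as [l|]; [destruct (Rlt_dec x (dval l)) as [Hxl|Hxl]|].
    + exists (dval l). split.
      { split; simpl; [lra|]. destruct hi as [h|]; simpl in *; auto; lra. }
      eapply Rle_trans; [|apply maxg_ge with (v := Lline Lm l (valat u l))].
      * rewrite ev_Lline, dval_valat, Rabs_left by lra. lra.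
      * unfold glines; simpl. right. apply in_or_app. right. left; auto.
    + destruct hi as [h|]; [destruct (Rlt_dec (dval h) x) as [Hxh|Hxh]|].
      * exists (dval h). split.
        { split; simpl in *; lra. }
        eapply Rle_trans; [|apply maxg_ge with (v := Rline Lm h (valat u h))].
        -- rewrite ev_Rline, dval_valat, Rabs_right by lra. lra.
        -- unfold glines; simpl. right. left; auto.
      * exists x. split; [split; simpl; lra|].
        eapply Rle_trans; [|apply maxg_ge with (v := u)]; [|left; auto].
        rewrite Rminus_diag, Rabs_R0. lra.
      * exists x. split; [split; simpl; auto; lra|].
        eapply Rle_trans; [|apply maxg_ge with (v := u)]; [|left; auto].
        rewrite Rminus_diag, Rabs_R0. lra.
    + destruct hi as [h|]; [destruct (Rlt_dec (dval h) x) as [Hxh|Hxh]|].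
      * exists (dval h). split.
        { split; simpl in *; auto; lra. }
        eapply Rle_trans; [|apply maxg_ge with (v := Rline Lm h (valat u h))].
        -- rewrite ev_Rline, dval_valat, Rabs_right by lra. lra.
        -- unfold glines; simpl. right. left; auto.
      * exists x. split; [split; simpl; auto; lra|].
        eapply Rle_trans; [|apply maxg_ge with (v := u)]; [|left; auto].
        rewrite Rminus_diag, Rabs_R0. lra.
      * exists x. split; [split; simpl; auto|].
        eapply Rle_trans; [|apply maxg_ge with (v := u)]; [|left; auto].
        rewrite Rminus_diag, Rabs_R0. lra.
  - assert (Hc : forall c, closure (odv lo) (odv hi) (dval c) ->
       exists y0, closure (odv lo) (odv hi) y0 /\
       ev u y0 + dval Lm * Rabs (x - y0) <= maxg (cone Lm c (valat u c)) x).
    { intros c Hcc. exists (dval c). split; auto. rewrite <- dval_valat. apply cone_val; auto. }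
    destruct (Rlt_dec 0 (dval (fst u))); apply Hc.
    + destruct lo as [l|]; [|destruct hi as [h|]]; simpl in *; unfold closure; simpl.
      * split; [lra|]. destruct hi; simpl in *; auto; lra.
      * split; auto; lra.
      * auto.
    + destruct hi as [h|]; [|destruct lo as [l|]]; simpl in *; unfold closure; simpl.
      * split; [|lra]. destruct lo; simpl in *; auto; lra.
      * split; auto; lra.
      * auto.
Qed.

Lemma group_up Lm lo hi u x : 0 <= dval Lm ->
  above (odv lo) x -> below (odv hi) x ->
  (lo = None -> dval (fst u) <= dval Lm) -> (hi = None -> - dval Lm <= dval (fst u)) ->
  maxg (group Lm lo hi u) x <= ev u x.
Proof.
  intros HL Hlo Hhi H1 H2. unfold group. apply maxg_le. intros v Hv.
  destruct u as [a b]. unfold ev at 2; simpl fst in *; simpl snd in *.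
  destruct (Rle_dec (Rabs (dval a)) (dval Lm)) as [Hs|Hs].
  - unfold glines in Hv; simpl in Hv. pose proof (Rle_abs (dval a)).
    destruct Hv as [<-|Hv]; [unfold ev; simpl; lra|].
    apply in_app_or in Hv. destruct Hv as [Hv|Hv].
    + destruct hi as [h|]; simpl in Hv; [|tauto]. destruct Hv as [<-|[]].
      rewrite ev_Rline, dval_valat. unfold ev; simpl. simpl in Hhi.
      assert (Habs : - dval Lm <= dval a <= dval Lm) by (split_Rabs; lra). nra.
    + destruct lo as [l|]; simpl in Hv; [|tauto]. destruct Hv as [<-|[]].
      rewrite ev_Lline, dval_valat. unfold ev; simpl. simpl in Hlo.
      assert (Habs : - dval Lm <= dval a <= dval Lm) by (split_Rabs; lra). nra.
  - destruct (Rlt_dec 0 (dval a)) as [Hp|Hp].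
    + destruct lo as [l|]; [|specialize (H1 eq_refl); simpl in H1; exfalso; apply Hs; rewrite Rabs_right; lra].
      simpl in Hlo. assert (dval Lm < dval a) by (rewrite Rabs_right in Hs; lra).
      unfold cone, glines in Hv; simpl in Hv.
      destruct Hv as [<-|[<-|[]]]; [rewrite ev_Rline|rewrite ev_Lline]; rewrite dval_valat; unfold ev; simpl; nra.
    + destruct hi as [h|]; [|specialize (H2 eq_refl); simpl in H2; exfalso; apply Hs; rewrite Rabs_left1; lra].
      simpl in Hhi. assert (dval a < - dval Lm) by (rewrite Rabs_left1 in Hs; lra).
      unfold cone, glines in Hv; simpl in Hv.
      destruct Hv as [<-|[<-|[]]]; [rewrite ev_Rline|rewrite ev_Lline]; rewrite dval_valat; unfold ev; simpl; nra.
Qed.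


Definition CIprop (G E : R -> R) (Lam : R) : Prop :=
  forall x y, G x <= G y + Lam * Rabs (x - y) + E x.

Lemma closure_lem G E Lam lo hi u : 0 <= Lam -> CIprop G E Lam -> ordered lo hi ->
  (forall y, above lo y -> below hi y -> G y = ev u y) ->
  forall y0 x, closure lo hi y0 -> G x - E x <= ev u y0 + Lam * Rabs (x - y0).
Proof.
  intros HL HCI Hord Hp y0 x [Hc1 Hc2].
  destruct (classic (below hi y0)) as [Hb|Hb].
  - rewrite <- Hp by auto. specialize (HCI x y0). lra.
  - destruct hi as [h|]; simpl in Hb; [|tauto]. simpl in Hc2.
    assert (y0 = h) by lra. subst y0.
    apply Rnot_lt_le. intros Hgam.
    set (gam := G x - E x - (ev u h + Lam * Rabs (x - h))).
    assert (Hg : 0 < gam) by (unfold gam; lra).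
    set (A := Rabs (dval (fst u)) + Lam + 1).
    assert (HA : 0 < A) by (unfold A; pose proof (Rabs_pos (dval (fst u))); lra).
    set (eta := match lo with Some l => Rmin ((h - l) / 2) (gam / (2 * A)) | None => gam / (2 * A) end).
    assert (He1 : 0 < eta).
    { unfold eta. destruct lo as [l|]; simpl in Hord.
      - apply Rmin_glb_lt; [lra|]. apply Rdiv_lt_0_compat; lra.
      - apply Rdiv_lt_0_compat; lra. }
    assert (He2 : eta <= gam / (2 * A)).
    { unfold eta. destruct lo; simpl; [apply Rmin_r|lra]. }
    assert (He3 : above lo (h - eta)).
    { destruct lo as [l|]; simpl in *; auto. unfold eta.
      pose proof (Rmin_l ((h - l) / 2) (gam / (2 * A))). lra. }
    specialize (HCI x (h - eta)). rewrite (Hp (h - eta)) in HCI by (auto; simpl; lra).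
    assert (K1 : ev u (h - eta) <= ev u h + Rabs (dval (fst u)) * eta).
    { unfold ev. pose proof (Rle_abs (- dval (fst u))). rewrite Rabs_Ropp in H. nra. }
    assert (K2 : Rabs (x - (h - eta)) <= Rabs (x - h) + eta).
    { replace (x - (h - eta)) with ((x - h) + eta) by ring.
      eapply Rle_trans; [apply Rabs_triang|]. rewrite (Rabs_right eta) by lra. lra. }
    assert (K3 : A * eta <= gam / 2).
    { replace (gam / 2) with (A * (gam / (2 * A))) by (field; lra).
      apply Rmult_le_compat_l; lra. }
    unfold A in K3. unfold gam in *. nra.
Qed.

Lemma O1 G E Lam hi u : CIprop G E Lam -> (forall x, 0 <= E x) ->
  (forall y, below hi y -> G y = ev u y) -> dval (fst u) <= Lam.
Proof.
  intros HCI HE Hp. apply Rnot_lt_le. intros Hlt.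
  set (x := match hi with Some h => h - 1 | None => 0 end).
  assert (Hx : forall d, 0 <= d -> below hi (x - d)).
  { intros d Hd. unfold x. destruct hi; simpl; lra. }
  set (D := (E x + 1) / (dval (fst u) - Lam)).
  assert (HD : 0 < D) by (apply Rdiv_lt_0_compat; [specialize (HE x)|]; lra).
  assert (Hx0 : below hi x) by (unfold x; destruct hi; simpl; lra).
  specialize (HCI x (x - D)). rewrite (Hp x) in HCI by auto. rewrite (Hp (x - D)) in HCI by (apply Hx; lra).
  replace (x - (x - D)) with D in HCI by ring. rewrite Rabs_right in HCI by lra.
  unfold ev in HCI.
  assert ((dval (fst u) - Lam) * D = E x + 1) by (unfold D; field; lra).
  nra.
Qed.

Lemma O2 G E Lam lo u : CIprop G E Lam -> (forall x, 0 <= E x) ->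
  (forall y, above lo y -> G y = ev u y) -> - Lam <= dval (fst u).
Proof.
  intros HCI HE Hp. apply Rnot_lt_le. intros Hlt.
  set (x := match lo with Some l => l | None => 0 end).
  assert (Hx : forall d, 0 <= d -> above lo (x + d)).
  { intros d Hd. unfold x. destruct lo; simpl; lra. }
  set (D := (E x + 1) / (- dval (fst u) - Lam)).
  assert (HD : 0 < D) by (apply Rdiv_lt_0_compat; [specialize (HE x)|]; lra).
  assert (Hx0 : above lo x) by (unfold x; destruct lo; simpl; lra).
  specialize (HCI x (x + D)). rewrite (Hp x) in HCI by auto.
  rewrite (Hp (x + D)) in HCI by (apply Hx; lra).
  replace (x - (x + D)) with (- D) in HCI by ring. rewrite Rabs_Ropp, Rabs_right in HCI by lra.
  unfold ev in HCI.
  assert ((- dval (fst u) - Lam) * D = E x + 1) by (unfold D; field; lra).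
  nra.
Qed.

Definition Inv (G : R -> R) (lo : option dy) (ts : list dy) (ps : list (dy * dy)) : Prop :=
  (forall y, above (odv lo) y -> pl_eval_aux ts ps y = G y) /\
  strictly_increasing (map dval ts) /\
  (forall l, lo = Some l -> forall t, In t ts -> dval l < dval t) /\
  length ps = S (length ts).

Lemma Inv_step G lo t ts u ps : Inv G lo (t :: ts) (u :: ps) ->
  Inv G (Some t) ts ps /\ ordered (odv lo) (Some (dval t)) /\
  (forall y, above (odv lo) y -> below (Some (dval t)) y -> G y = ev u y).
Proof.
  intros [H1 [H2 [H3 H4]]]. simpl in H2. apply SI_cons in H2. destruct H2 as [H2a H2b].
  split; [|split].
  - split; [|split; [auto|split]].
    + intros y Hy. simpl in Hy. rewrite <- H1.
      * destruct u as [a b]. simpl. destruct (Rlt_dec y (dval t)); [lra|auto].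
      * destruct lo as [l|]; simpl; auto. specialize (H3 l eq_refl t (or_introl eq_refl)). lra.
    + intros l [= <-] t0 Ht0. apply H2a. apply in_map; auto.
    + simpl in H4. lia.
  - destruct lo as [l|]; simpl; auto. apply H3 with (t := t); auto. left; auto.
  - intros y Hy1 Hy2. rewrite <- H1 by auto. destruct u as [a b]. simpl in *.
    destruct (Rlt_dec y (dval t)); [auto|lra].
Qed.

Lemma Inv_last G lo u ps : Inv G lo [] (u :: ps) ->
  forall y, above (odv lo) y -> G y = ev u y.
Proof.
  intros [H1 _] y Hy. rewrite <- H1 by auto. destruct u; reflexivity.
Qed.

Lemma groups_up G E Lm ts : 0 <= dval Lm -> CIprop G E (dval Lm) -> (forall x, 0 <= E x) ->
  forall lo ps, Inv G lo ts ps ->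
  forall x, above (odv lo) x -> exists g, In g (groups Lm lo ts ps) /\ maxg g x <= G x.
Proof.
  intros HL HCI HE. induction ts as [|t ts IH]; intros lo ps HI x Hx.
  - destruct ps as [|u ps]; [destruct HI as [_ [_ [_ H]]]; simpl in H; lia|].
    pose proof (Inv_last G lo u ps HI) as Hp.
    exists (group Lm lo None u). split; [left; auto|].
    rewrite Hp by auto. apply group_up; [auto|auto|simpl; auto| |].
    + intros ->. apply (O1 G E (dval Lm) None u); auto; intros y _; apply Hp; exact I.
    + intros _. apply (O2 G E (dval Lm) (odv lo) u); auto.
  - destruct ps as [|u ps]; [destruct HI as [_ [_ [_ H]]]; simpl in H; lia|].
    destruct (Inv_step G lo t ts u ps HI) as [HI' [Hord Hp]].
    destruct (Rlt_dec x (dval t)) as [Hxt|Hxt].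
    + exists (group Lm lo (Some t) u). split; [left; auto|].
      rewrite Hp by (simpl; auto). apply group_up; [auto|auto|simpl; auto| |].
      * intros ->. apply (O1 G E (dval Lm) (Some (dval t)) u); auto;
        intros y Hy; apply Hp; simpl; auto.
      * intros [=].
    + destruct (IH (Some t) ps HI' x) as [g [Hg1 Hg2]]; [simpl; lra|].
      exists g. split; auto. right; auto.
Qed.

Lemma groups_low G E Lm ts : 0 <= dval Lm -> CIprop G E (dval Lm) ->
  forall lo ps, Inv G lo ts ps ->
  forall g, In g (groups Lm lo ts ps) -> forall x, G x - E x <= maxg g x.
Proof.
  intros HL HCI. induction ts as [|t ts IH]; intros lo ps HI g Hg x.
  - destruct ps as [|u ps]; [destruct HI as [_ [_ [_ H]]]; simpl in H; lia|].
    pose proof (Inv_last G lo u ps HI) as Hp.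
    simpl in Hg. destruct Hg as [<-|[]].
    destruct (group_low Lm lo None u x HL) as [y0 [Hy0 Hle]]; [destruct lo; simpl; auto|].
    eapply Rle_trans; [|exact Hle].
    apply (closure_lem G E (dval Lm) (odv lo) None u); auto.
    + destruct lo; simpl; auto.
  - destruct ps as [|u ps]; [destruct HI as [_ [_ [_ H]]]; simpl in H; lia|].
    destruct (Inv_step G lo t ts u ps HI) as [HI' [Hord Hp]].
    simpl in Hg. destruct Hg as [<-|Hg].
    + destruct (group_low Lm lo (Some t) u x HL Hord) as [y0 [Hy0 Hle]].
      eapply Rle_trans; [|exact Hle].
      apply (closure_lem G E (dval Lm) (odv lo) (Some (dval t)) u); auto.
    + eapply IH; eauto.
Qed.

Lemma groups_slope Lm ts : 0 <= dval Lm -> forall lo ps g, In g (groups Lm lo ts ps) ->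
  forall v, In v (glines g) -> Rabs (dval (fst v)) <= dval Lm.
Proof.
  intros HL. 
  assert (Hgr : forall lo hi u v, In v (glines (group Lm lo hi u)) -> Rabs (dval (fst v)) <= dval Lm).
  { intros lo hi u v Hv. unfold group in Hv.
    destruct (Rle_dec (Rabs (dval (fst u))) (dval Lm)).
    - unfold glines in Hv; simpl in Hv. destruct Hv as [<-|Hv]; auto.
      apply in_app_or in Hv. destruct Hv as [Hv|Hv].
      + destruct hi; simpl in Hv; [|tauto]. destruct Hv as [<-|[]]. simpl. rewrite Rabs_right; lra.
      + destruct lo; simpl in Hv; [|tauto]. destruct Hv as [<-|[]]. simpl. rewrite dval_neg, Rabs_Ropp, Rabs_right; lra.
    - destruct (Rlt_dec 0 (dval (fst u))); unfold cone, glines in Hv; simpl in Hv;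
      (destruct Hv as [<-|[<-|[]]]; simpl; [rewrite Rabs_right; lra|rewrite dval_neg, Rabs_Ropp, Rabs_right; lra]). }
  induction ts as [|t ts IH]; intros lo ps g Hg v Hv; destruct ps as [|u ps]; simpl in Hg; try tauto.
  - destruct Hg as [<-|[]]. eauto.
  - destruct Hg as [<-|Hg]; eauto.
Qed.

Lemma groups_len Lm ts : forall lo ps, length ps = S (length ts) -> length (groups Lm lo ts ps) = length ps.
Proof.
  induction ts as [|t ts IH]; intros lo ps H; destruct ps as [|u ps]; simpl in *; try lia.
  - f_equal. apply IH. lia.
Qed.

Lemma group_size Lm lo hi u : (length (glines (group Lm lo hi u)) <= 3)%nat.
Proof.
  unfold group. destruct (Rle_dec _ _); [|destruct (Rlt_dec _ _); simpl; lia].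
  unfold glines; simpl. destruct hi, lo; simpl; lia.
Qed.

Lemma groups_size Lm ts : forall lo ps g, In g (groups Lm lo ts ps) -> (length (glines g) <= 3)%nat.
Proof.
  induction ts as [|t ts IH]; intros lo ps g Hg; destruct ps as [|u ps]; simpl in Hg; try tauto.
  - destruct Hg as [<-|[]]. apply group_size.
  - destruct Hg as [<-|Hg]; [apply group_size|eauto].
Qed.

Lemma groups_bnd Lm B ts : Bnd B Lm -> Forall (Bnd B) ts ->
  forall lo ps, Forall (PB B) ps -> (forall l, lo = Some l -> Bnd B l) ->
  forall g, In g (groups Lm lo ts ps) -> forall v, In v (glines g) -> PB (8 * B + 3) v.
Proof.
  intros HL Hts.
  assert (H0 : Bnd B dzero) by (split; simpl; [pose proof (Zpow2_pos B); lia| lia]).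
  assert (Hva : forall u t, PB B u -> Bnd B t -> Bnd (4 * B + 1) (valat u t)).
  { intros u t [Ha Hb] Ht. unfold valat. replace (4 * B + 1)%nat with (2 * (2 * B) + 1)%nat by lia.
    apply Bnd_add; [apply Bnd_mul; auto|]. eapply Bnd_mono; [|eauto]; lia. }
  assert (HR : forall t v, Bnd B t -> Bnd (4 * B + 1) v -> PB (8 * B + 3) (Rline Lm t v)).
  { intros t v Ht Hv. split; cbn [fst snd Rline Lline].
    - eapply Bnd_mono; [|eauto]; lia.
    - replace (8 * B + 3)%nat with (2 * (4 * B + 1) + 1)%nat by lia. apply Bnd_sub; auto.
      eapply Bnd_mono; [|apply Bnd_mul; eauto]; lia. }
  assert (HLl : forall t v, Bnd B t -> Bnd (4 * B + 1) v -> PB (8 * B + 3) (Lline Lm t v)).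
  { intros t v Ht Hv. split; cbn [fst snd Rline Lline].
    - apply Bnd_neg. eapply Bnd_mono; [|eauto]; lia.
    - replace (8 * B + 3)%nat with (2 * (4 * B + 1) + 1)%nat by lia. apply Bnd_add; auto.
      eapply Bnd_mono; [|apply Bnd_mul; eauto]; lia. }
  assert (Hgr : forall lo hi u, PB B u -> (forall l, lo = Some l -> Bnd B l) -> (forall l, hi = Some l -> Bnd B l) ->
     forall v, In v (glines (group Lm lo hi u)) -> PB (8 * B + 3) v).
  { intros lo hi u Hu Hlo Hhi v Hv. unfold group in Hv.
    destruct (Rle_dec (Rabs (dval (fst u))) (dval Lm)).
    - unfold glines in Hv; simpl in Hv. destruct Hv as [<-|Hv].
      { destruct Hu; split; (eapply Bnd_mono; [|eassumption]; lia). }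
      apply in_app_or in Hv. destruct Hv as [Hv|Hv].
      + destruct hi as [h|]; simpl in Hv; [|tauto]. destruct Hv as [<-|[]]. apply HR; auto.
      + destruct lo as [l|]; simpl in Hv; [|tauto]. destruct Hv as [<-|[]]. apply HLl; auto.
    - assert (Hc : forall c, Bnd B c -> forall v, In v (glines (cone Lm c (valat u c))) -> PB (8 * B + 3) v).
      { intros c Hc v0 Hv0. unfold cone, glines in Hv0; simpl in Hv0.
        destruct Hv0 as [<-|[<-|[]]]; [apply HR|apply HLl]; auto. }
      destruct (Rlt_dec 0 (dval (fst u))); apply Hc in Hv; auto.
      + destruct lo; [auto|destruct hi; auto].
      + destruct hi; [auto|destruct lo; auto]. }
  induction ts as [|t ts IH]; intros lo ps Hps Hlo g Hg v Hv; destruct ps as [|u ps]; simpl in Hg; try tauto.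
  - destruct Hg as [<-|[]]. inversion Hps; subst. apply (Hgr lo None u); auto; intros l Hl; discriminate.
  - inversion Hts; subst. inversion Hps; subst. destruct Hg as [<-|Hg].
    + apply (Hgr lo (Some t) u); auto; intros l [= <-]; auto.
    + apply (IH H3 (Some t) ps H5) with (g := g); auto; intros l [= <-]; auto.
Qed.


Definition flZ (m : nat) (x : R) : Z := (up (x * 2 ^ m) - 1)%Z.
Definition flR (m : nat) (x : R) : R := IZR (flZ m x) / 2 ^ m.
Definition grid (m : nat) (y : R) : Prop := exists k, y = IZR k / 2 ^ m.

Lemma flR_spec m x : flR m x <= x < flR m x + / 2 ^ m.
Proof.
  unfold flR, flZ. pose proof (pow2_pos m). destruct (archimed (x * 2 ^ m)) as [A B].
  rewrite minus_IZR. split.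
  - apply Rmult_le_reg_r with (2 ^ m); auto. unfold Rdiv. rewrite Rmult_assoc, Rinv_l by lra. lra.
  - apply Rmult_lt_reg_r with (2 ^ m); auto. unfold Rdiv. rewrite Rmult_plus_distr_r, Rmult_assoc, Rinv_l by lra. lra.
Qed.

Lemma grid_flR m x : grid m (flR m x).
Proof. exists (flZ m x). reflexivity. Qed.

Lemma grid_flR1 m x : grid m (flR m x + / 2 ^ m).
Proof.
  exists (flZ m x + 1)%Z. unfold flR. rewrite plus_IZR. pose proof (pow2_pos m). field. lra.
Qed.

Lemma flR_grid_eq m x y : grid m y -> y <= x < y + / 2 ^ m -> flR m x = y.
Proof.
  intros [k ->] [H1 H2]. pose proof (pow2_pos m).
  unfold flR, flZ. assert (Hu : up (x * 2 ^ m) = (k + 1)%Z).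
  { symmetry. apply tech_up; rewrite plus_IZR.
    - apply Rmult_lt_compat_r with (r := 2 ^ m) in H2; auto.
      replace ((IZR k / 2 ^ m + / 2 ^ m) * 2 ^ m) with (IZR k + 1) in H2 by (field; lra). lra.
    - apply Rmult_le_compat_r with (r := 2 ^ m) in H1; [|lra].
      replace (IZR k / 2 ^ m * 2 ^ m) with (IZR k) in H1 by (field; lra). lra. }
  rewrite Hu. f_equal. f_equal. lia.
Qed.

Lemma grid_gap m a b : grid m a -> grid m b -> a < b -> a + / 2 ^ m <= b.
Proof.
  intros [k ->] [j ->] H. pose proof (pow2_pos m).
  assert (IZR k < IZR j).
  { apply Rmult_lt_compat_r with (r := 2 ^ m) in H; auto.
    replace (IZR k / 2 ^ m * 2 ^ m) with (IZR k) in H by (field; lra).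
    replace (IZR j / 2 ^ m * 2 ^ m) with (IZR j) in H by (field; lra). auto. }
  apply lt_IZR in H1. assert (IZR k + 1 <= IZR j) by (rewrite <- plus_IZR; apply IZR_le; lia).
  replace (IZR k / 2 ^ m + / 2 ^ m) with ((IZR k + 1) / 2 ^ m) by (field; lra).
  unfold Rdiv. apply Rmult_le_compat_r; auto. left; apply Rinv_0_lt_compat; auto.
Qed.

Fixpoint ins (d : dy) (l : list dy) : list dy :=
  match l with
  | [] => [d]
  | e :: l' =>
      match total_order_T (dval d) (dval e) with
      | inleft (left _) => d :: l
      | inleft (right _) => l
      | inright _ => e :: ins d l'
      end
  end.
Fixpoint isort (l : list dy) : list dy :=
  match l with [] => [] | d :: l' => ins d (isort l') end.

Lemma ins_in d l e : In e (ins d l) -> In e (d :: l).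
Proof.
  induction l as [|x l IH]; simpl; [tauto|].
  destruct (total_order_T (dval d) (dval x)) as [[H|H]|H]; simpl; try tauto.
  intros [H1|H1]; [tauto|]. apply IH in H1. simpl in H1. tauto.
Qed.

Lemma ins_mem d l r : In r (map dval (d :: l)) -> In r (map dval (ins d l)).
Proof.
  induction l as [|x l IH]; simpl; [tauto|].
  destruct (total_order_T (dval d) (dval x)) as [[H|H]|H]; simpl.
  - tauto.
  - intros [H1|[H1|H1]]; [left; congruence|tauto|tauto].
  - intros [H1|[H1|H1]]; [right; apply IH; simpl; tauto|tauto|right; apply IH; simpl; tauto].
Qed.

Lemma ins_SI d l : strictly_increasing (map dval l) -> strictly_increasing (map dval (ins d l)).
Proof.
  induction l as [|x l IH]; [simpl; auto|].
  intros Hs. cbn [map] in Hs. apply SI_cons in Hs. destruct Hs as [Hs1 Hs2].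
  cbn [ins]. destruct (total_order_T (dval d) (dval x)) as [[H|H]|H]; cbn [map].
  - apply SI_cons. split.
    + intros y [<-|Hy]; auto. specialize (Hs1 y Hy). lra.
    + apply SI_cons. auto.
  - apply SI_cons; auto.
  - apply SI_cons. split; auto. intros y Hy. apply in_map_iff in Hy. destruct Hy as [e [<- He]].
    apply ins_in in He. destruct He as [<-|He]; auto. apply Hs1. apply in_map; auto.
Qed.

Lemma isort_SI l : strictly_increasing (map dval (isort l)).
Proof. induction l; simpl; auto. apply ins_SI; auto. Qed.

Lemma isort_in l e : In e (isort l) -> In e l.
Proof. induction l; simpl; auto. intros H. apply ins_in in H. firstorder. Qed.

Lemma isort_mem l r : In r (map dval l) -> In r (map dval (isort l)).
Proof.
  induction l as [|d l IH]; simpl; [tauto|]. intros H. apply ins_mem. simpl. tauto.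
Qed.

Lemma isort_len l : (length (isort l) <= length l)%nat.
Proof.
  assert (Hi : forall d l, (length (ins d l) <= S (length l))%nat).
  { intros d l0. induction l0 as [|x l0 IH]; simpl; [lia|].
    destruct (total_order_T (dval d) (dval x)) as [[H|H]|H]; simpl; lia. }
  induction l; simpl; auto. specialize (Hi a (isort l)). lia.
Qed.


Definition Qs (m : nat) (gl : list grp) : list R := map (flR m) (Zs gl).
Definition cands (m : nat) (gl : list grp) : list dy :=
  flat_map (fun z => [Dy (flZ m z) m; Dy (flZ m z + 1) m]) (Zs gl).
Definition Sl (m : nat) (gl : list grp) : list dy := isort (cands m gl).

Definition chord (gl : list grp) (m : nat) (q x : R) : R :=
  Hf gl q + (x - q) * ((Hf gl (q + / 2 ^ m) - Hf gl q) * 2 ^ m).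
Definition Lfun (gl : list grp) (m : nat) (x : R) : R :=
  if in_dec Req_dec_T (flR m x) (Qs m gl) then chord gl m (flR m x) x else Hf gl x.

Lemma Sv_iff m gl r : In r (map dval (Sl m gl)) <->
  exists z, In z (Zs gl) /\ (r = flR m z \/ r = flR m z + / 2 ^ m).
Proof.
  split.
  - intros H. apply in_map_iff in H. destruct H as [d [<- Hd]]. apply isort_in in Hd.
    unfold cands in Hd. apply in_flat_map in Hd. destruct Hd as [z [Hz Hd]].
    exists z. split; auto. simpl in Hd. destruct Hd as [<-|[<-|[]]]; [left; reflexivity|right].
    unfold dval, flR; simpl. rewrite plus_IZR. pose proof (pow2_pos m). field. lra.
  - intros [z [Hz Hr]]. apply isort_mem. apply in_map_iff.
    destruct Hr as [-> | ->].
    + exists (Dy (flZ m z) m). split; [reflexivity|]. unfold cands. apply in_flat_map. exists z. simpl; auto.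
    + exists (Dy (flZ m z + 1) m). split.
      * unfold dval, flR; simpl. rewrite plus_IZR. pose proof (pow2_pos m). field. lra.
      * unfold cands. apply in_flat_map. exists z. simpl; auto.
Qed.

Lemma Sv_grid m gl r : In r (map dval (Sl m gl)) -> grid m r.
Proof.
  intros H. apply Sv_iff in H. destruct H as [z [_ [->| ->]]]; [apply grid_flR|apply grid_flR1].
Qed.

Lemma Q_in_S m gl q : In q (Qs m gl) -> In q (map dval (Sl m gl)) /\ In (q + / 2 ^ m) (map dval (Sl m gl)).
Proof.
  intros H. unfold Qs in H. apply in_map_iff in H. destruct H as [z [<- Hz]].
  split; apply Sv_iff; exists z; auto.
Qed.

Lemma flR_mono m x y : x <= y -> flR m x <= flR m y.
Proof.
  intros H. apply Rnot_lt_le. intros H1. pose proof (grid_gap m _ _ (grid_flR m y) (grid_flR m x) H1).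
  pose proof (flR_spec m x). pose proof (flR_spec m y). lra.
Qed.

Lemma flR_id m p : grid m p -> flR m p = p.
Proof. intros H. apply flR_grid_eq; auto. pose proof (Rinv_0_lt_compat _ (pow2_pos m)). lra. Qed.


Lemma Lfun_grid gl m p : grid m p -> Lfun gl m p = Hf gl p.
Proof.
  intros H. unfold Lfun. rewrite flR_id by auto.
  destruct (in_dec _ _ _); auto. unfold chord. ring.
Qed.

Lemma chord_slope gl m Lam q : (forall x y, Rabs (Hf gl x - Hf gl y) <= Lam * Rabs (x - y)) ->
  Rabs ((Hf gl (q + / 2 ^ m) - Hf gl q) * 2 ^ m) <= Lam.
Proof.
  intros HL. pose proof (pow2_pos m). specialize (HL (q + / 2 ^ m) q).
  replace (q + / 2 ^ m - q) with (/ 2 ^ m) in HL by ring.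
  rewrite (Rabs_right (/ 2 ^ m)) in HL by (left; apply Rinv_0_lt_compat; auto).
  rewrite Rabs_mult, (Rabs_right (2 ^ m)) by lra.
  apply Rmult_le_compat_r with (r := 2 ^ m) in HL; [|lra].
  replace (Lam * / 2 ^ m * 2 ^ m) with Lam in HL by (field; lra). auto.
Qed.

Lemma L_approx gl m Lam : (forall x y, Rabs (Hf gl x - Hf gl y) <= Lam * Rabs (x - y)) ->
  forall x, Rabs (Lfun gl m x - Hf gl x) <= 2 * Lam / 2 ^ m.
Proof.
  intros HL x. pose proof (pow2_pos m).
  assert (HL0 : 0 <= Lam).
  { specialize (HL 1 0). replace (1 - 0) with 1 in HL by ring. rewrite Rabs_R1 in HL.
    pose proof (Rabs_pos (Hf gl 1 - Hf gl 0)). lra. }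
  unfold Lfun. destruct (in_dec _ _ _).
  - unfold chord. set (q := flR m x). pose proof (flR_spec m x). fold q in H0.
    pose proof (chord_slope gl m Lam q HL).
    set (s := (Hf gl (q + / 2 ^ m) - Hf gl q) * 2 ^ m) in *.
    specialize (HL q x).
    replace (Hf gl q + (x - q) * s - Hf gl x) with ((Hf gl q - Hf gl x) + (x - q) * s) by ring.
    eapply Rle_trans; [apply Rabs_triang|]. rewrite Rabs_mult.
    rewrite (Rabs_left1 (q - x)) in HL by lra. rewrite (Rabs_right (x - q)) by lra.
    assert (x - q <= / 2 ^ m) by lra.
    assert ((x - q) * Rabs s <= / 2 ^ m * Lam) by (apply Rmult_le_compat; auto; try lra; apply Rabs_pos).
    assert (Lam * - (q - x) <= Lam * / 2 ^ m) by (apply Rmult_le_compat_l; lra).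
    unfold Rdiv. lra.
  - rewrite Rminus_diag, Rabs_R0. apply Rmult_le_pos; [lra|]. left; apply Rinv_0_lt_compat; auto.
Qed.

Lemma L_lip gl m Lam : (forall x y, Rabs (Hf gl x - Hf gl y) <= Lam * Rabs (x - y)) ->
  forall x y, Rabs (Lfun gl m x - Lfun gl m y) <= Lam * Rabs (x - y).
Proof.
  intros HL. pose proof (pow2_pos m). set (h := / 2 ^ m).
  assert (Hh : 0 < h) by (apply Rinv_0_lt_compat; auto).
  assert (HL0 : 0 <= Lam).
  { specialize (HL 1 0). replace (1 - 0) with 1 in HL by ring. rewrite Rabs_R1 in HL.
    pose proof (Rabs_pos (Hf gl 1 - Hf gl 0)). lra. }
  set (inQ := fun x => In (flR m x) (Qs m gl)).
  set (Rr := fun x => if in_dec Req_dec_T (flR m x) (Qs m gl) then flR m x + h else x).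
  set (Ll := fun x => if in_dec Req_dec_T (flR m x) (Qs m gl) then flR m x else x).
  assert (HR : forall x, x <= Rr x /\ Lfun gl m (Rr x) = Hf gl (Rr x) /\
                 Rabs (Lfun gl m x - Lfun gl m (Rr x)) <= Lam * (Rr x - x)).
  { intros x. unfold Rr. pose proof (flR_spec m x). fold h in H0.
    destruct (in_dec _ _ _) as [Hi|Hi].
    - rewrite Lfun_grid by apply grid_flR1. split; [lra|split; auto].
      unfold Lfun. destruct (in_dec _ _ _); [|tauto]. unfold chord. fold h.
      pose proof (chord_slope gl m Lam (flR m x) HL). fold h in H1.
      set (s := (Hf gl (flR m x + h) - Hf gl (flR m x)) * 2 ^ m) in *.
      assert (Hs : Hf gl (flR m x + h) = Hf gl (flR m x) + h * s).
      { unfold s, h. field. lra. }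
      rewrite Hs. replace (Hf gl (flR m x) + (x - flR m x) * s - (Hf gl (flR m x) + h * s))
        with ((x - (flR m x + h)) * s) by ring.
      rewrite Rabs_mult, Rabs_left1 by lra. pose proof (Rabs_pos s). nra.
    - split; [lra|split]; [unfold Lfun; destruct (in_dec _ _ _); tauto|].
      rewrite Rminus_diag, Rabs_R0. lra. }
  assert (HLl : forall x, Ll x <= x /\ Lfun gl m (Ll x) = Hf gl (Ll x) /\
                 Rabs (Lfun gl m x - Lfun gl m (Ll x)) <= Lam * (x - Ll x)).
  { intros x. unfold Ll. pose proof (flR_spec m x). fold h in H0.
    destruct (in_dec _ _ _) as [Hi|Hi].
    - rewrite Lfun_grid by apply grid_flR. split; [lra|split; auto].
      unfold Lfun. destruct (in_dec _ _ _); [|tauto]. unfold chord. fold h.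
      pose proof (chord_slope gl m Lam (flR m x) HL). fold h in H1.
      set (s := (Hf gl (flR m x + h) - Hf gl (flR m x)) * 2 ^ m) in *.
      replace (Hf gl (flR m x) + (x - flR m x) * s - Hf gl (flR m x)) with ((x - flR m x) * s) by ring.
      rewrite Rabs_mult, (Rabs_right (x - flR m x)) by lra. pose proof (Rabs_pos s). nra.
    - split; [lra|split]; [unfold Lfun; destruct (in_dec _ _ _); tauto|].
      rewrite Rminus_diag, Rabs_R0. lra. }
  assert (Hmain : forall x y, x <= y -> Rabs (Lfun gl m x - Lfun gl m y) <= Lam * (y - x)).
  { intros x y Hxy.
    destruct (classic (inQ x /\ flR m x = flR m y)) as [[Hq He]|Hn].
    - unfold Lfun. unfold inQ in Hq. rewrite <- He.
      destruct (in_dec _ _ _); [|tauto]. unfold chord.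
      pose proof (chord_slope gl m Lam (flR m x) HL).
      set (s := (Hf gl (flR m x + / 2 ^ m) - Hf gl (flR m x)) * 2 ^ m) in *.
      replace (Hf gl (flR m x) + (x - flR m x) * s - (Hf gl (flR m x) + (y - flR m x) * s))
        with ((x - y) * s) by ring.
      rewrite Rabs_mult, Rabs_left1 by lra. pose proof (Rabs_pos s). nra.
    - assert (Hord : Rr x <= Ll y).
      { pose proof (flR_spec m x) as Fx. pose proof (flR_spec m y) as Fy. fold h in Fx, Fy.
        pose proof (flR_mono m x y Hxy) as Mon.
        unfold Rr, Ll. unfold inQ in Hn.
        destruct (in_dec Req_dec_T (flR m x) (Qs m gl)) as [Hx|Hx]; destruct (in_dec Req_dec_T (flR m y) (Qs m gl)) as [Hy|Hy].
        - assert (flR m x < flR m y) by (destruct (Req_dec (flR m x) (flR m y)); [tauto|lra]).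
          apply grid_gap; auto; apply grid_flR.
        - assert (flR m x <> flR m y) by (intro E; rewrite E in Hx; tauto).
          assert (flR m x < flR m y) by lra.
          pose proof (grid_gap m _ _ (grid_flR m x) (grid_flR m y) H1). fold h in H2. lra.
        - assert (flR m x <> flR m y) by (intro E; rewrite <- E in Hy; tauto).
          assert (flR m x < flR m y) by lra.
          pose proof (grid_gap m _ _ (grid_flR m x) (grid_flR m y) H1). fold h in H2. lra.
        - auto. }
      destruct (HR x) as [R1 [R2 R3]]. destruct (HLl y) as [L1 [L2 L3]].
      specialize (HL (Rr x) (Ll y)). rewrite <- R2, <- L2 in HL.
      rewrite (Rabs_left1 (Rr x - Ll y)) in HL by lra.
      replace (Lfun gl m x - Lfun gl m y) with
        ((Lfun gl m x - Lfun gl m (Rr x)) + (Lfun gl m (Rr x) - Lfun gl m (Ll y)) + (Lfun gl m (Ll y) - Lfun gl m y)) by ring.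
      eapply Rle_trans; [apply Rabs_triang|].
      eapply Rle_trans; [apply Rplus_le_compat; [apply Rabs_triang|apply Rle_refl]|].
      rewrite <- Rabs_Ropp in L3. replace (- (Lfun gl m y - Lfun gl m (Ll y))) with (Lfun gl m (Ll y) - Lfun gl m y) in L3 by ring.
      nra. }
  intros x y. destruct (Rle_dec x y).
  - rewrite (Rabs_left1 (x - y)) by lra. replace (- (x - y)) with (y - x) by ring. auto.
  - rewrite (Rabs_right (x - y)) by lra. rewrite <- Rabs_Ropp. replace (- (Lfun gl m x - Lfun gl m y)) with (Lfun gl m y - Lfun gl m x) by ring.
    apply Hmain. lra.
Qed.


Definition GoodSeg (m : nat) (gl : list grp) (lo hi : option R) : Prop :=
  (forall a, lo = Some a -> In a (map dval (Sl m gl))) /\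
  (forall b, hi = Some b -> In b (map dval (Sl m gl))) /\
  (forall y, In y (map dval (Sl m gl)) -> ~ (sabove lo y /\ below hi y)) /\
  ordered lo hi.

Lemma cell_trap m gl lo hi q x : GoodSeg m gl lo hi -> In q (Qs m gl) ->
  above lo x -> below hi x -> q <= x < q + / 2 ^ m -> lo = Some q.
Proof.
  intros [G1 [G2 [G3 G4]]] Hq Hx1 Hx2 Hx3.
  destruct (Q_in_S m gl q Hq) as [Sq Sq'].
  destruct lo as [a|].
  - assert (Ha : ~ a < q).
    { intro Hlt. apply (G3 q Sq). split; [simpl; auto|].
      destruct hi as [b|]; simpl in *; auto; lra. }
    simpl in Hx1. assert (Hg : grid m a) by (apply (Sv_grid m gl); auto).
    assert (Hgq : grid m q) by (apply (Sv_grid m gl); auto).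
    destruct (Rlt_dec q a) as [Hqa|Hqa].
    + pose proof (grid_gap m q a Hgq Hg Hqa). lra.
    + f_equal. lra.
  - exfalso. apply (G3 q Sq). split; [simpl; auto|].
    destruct hi as [b|]; simpl in *; auto; lra.
Qed.

Lemma Qcell_hi m gl a hi : GoodSeg m gl (Some a) hi -> In a (Qs m gl) -> hi = Some (a + / 2 ^ m).
Proof.
  intros [G1 [G2 [G3 G4]]] Hq.
  destruct (Q_in_S m gl a Hq) as [Sq Sq'].
  pose proof (Rinv_0_lt_compat _ (pow2_pos m)).
  destruct hi as [b|].
  - assert (Hb : ~ b > a + / 2 ^ m).
    { intro Hlt. apply (G3 _ Sq'). split; simpl; lra. }
    simpl in G4. pose proof (grid_gap m a b (Sv_grid m gl a Sq) (Sv_grid m gl b (G2 b eq_refl)) G4).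
    f_equal. lra.
  - exfalso. apply (G3 _ Sq'). split; simpl; auto; lra.
Qed.

Lemma seg_affine m gl B2 B3 lo hi : gl <> [] ->
  (forall v, In v (pool gl) -> PB B2 v) -> (forall d, In d (Sl m gl) -> Bnd B3 d) ->
  (B2 <= B3)%nat -> (m <= B3)%nat ->
  GoodSeg m gl lo hi -> affine_on (Lfun gl m) (PB (64 * B3 + 25)) lo hi.
Proof.
  intros Hne Hpool HS HB Hm HG. pose proof (pow2_pos m) as Hp.
  destruct (classic (exists a, lo = Some a /\ In a (Qs m gl))) as [[a [-> Ha]]|Hno].
  - pose proof (Qcell_hi m gl a hi HG Ha) as Hhi. subst hi.
    destruct (Q_in_S m gl a Ha) as [Sa Sa'].
    apply in_map_iff in Sa. destruct Sa as [da [Eda Hda]].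
    apply in_map_iff in Sa'. destruct Sa' as [db [Edb Hdb]].
    destruct (Hf_line gl a Hne) as [w [Hw Ew]].
    destruct (Hf_line gl (a + / 2 ^ m) Hne) as [w' [Hw' Ew']].
    pose proof (HS da Hda) as HSa. pose proof (HS db Hdb) as HSb.
    set (Ha' := valat w da). set (Hb' := valat w' db).
    set (sg := dmul (dsub Hb' Ha') (Dy (2 ^ Z.of_nat m) 0)).
    exists (sg, dsub Ha' (dmul sg da)). split.
    + assert (B1 : Bnd (4 * B3 + 1) Ha').
      { unfold Ha', valat. replace (4 * B3 + 1)%nat with (2 * (2 * B3) + 1)%nat by lia.
        destruct (Hpool w Hw) as [P1 P2]. apply Bnd_add.
        - apply Bnd_mul; (eapply Bnd_mono; [|eassumption]; lia).
        - eapply Bnd_mono; [|eassumption]; lia. }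
      assert (B2' : Bnd (4 * B3 + 1) Hb').
      { unfold Hb', valat. replace (4 * B3 + 1)%nat with (2 * (2 * B3) + 1)%nat by lia.
        destruct (Hpool w' Hw') as [P1 P2]. apply Bnd_add.
        - apply Bnd_mul; (eapply Bnd_mono; [|eassumption]; lia).
        - eapply Bnd_mono; [|eassumption]; lia. }
      assert (Bp : Bnd (8 * B3 + 3) (Dy (2 ^ Z.of_nat m) 0)).
      { split; simpl; [|lia]. rewrite Z.abs_eq by (pose proof (Zpow2_pos m); lia). apply Zpow2_mono. lia. }
      assert (Bs : Bnd (16 * B3 + 6) sg).
      { unfold sg. replace (16 * B3 + 6)%nat with (2 * (8 * B3 + 3))%nat by lia.
        apply Bnd_mul; auto. replace (8 * B3 + 3)%nat with (2 * (4 * B3 + 1) + 1)%nat by lia.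
        apply Bnd_sub; auto. }
      split; cbn [fst snd].
      * eapply Bnd_mono; [|eassumption]; lia.
      * replace (64 * B3 + 25)%nat with (2 * (32 * B3 + 12) + 1)%nat by lia.
        apply Bnd_sub; [eapply Bnd_mono; [|eassumption]; lia|].
        replace (32 * B3 + 12)%nat with (2 * (16 * B3 + 6))%nat by lia.
        apply Bnd_mul; auto. eapply Bnd_mono; [|eassumption]; lia.
    + intros x Hx1 Hx2. simpl in Hx1, Hx2.
      assert (Hga : grid m a) by (apply (Sv_grid m gl); apply Q_in_S; auto).
      unfold Lfun. rewrite (flR_grid_eq m x a Hga) by lra.
      destruct (in_dec _ _ _); [|tauto].
      unfold chord, ev; simpl. unfold sg. rewrite dval_sub, !dval_mul, dval_sub.
      unfold Ha', Hb'. rewrite !dval_valat, Eda, Edb, <- Ew, <- Ew'.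
      replace (dval {| dnum := 2 ^ Z.of_nat m; dexp := 0 |}) with (2 ^ m)
        by (unfold dval; simpl; rewrite IZR_pow2; field).
      ring.
  - assert (HN : NoZ gl lo hi).
    { intros z Hz [Hz1 Hz2]. pose proof (flR_spec m z).
      assert (Hq : In (flR m z) (Qs m gl)) by (unfold Qs; apply in_map; auto).
      assert (above lo z) by (destruct lo; simpl in *; auto; lra).
      pose proof (cell_trap m gl lo hi (flR m z) z HG Hq H0 Hz2 H).
      apply Hno. exists (flR m z). auto. }
    destruct (seg_line gl lo hi Hne HN) as [u [Hu Eu]].
    exists u. split.
    + destruct (Hpool u Hu); split; (eapply Bnd_mono; [|eassumption]; lia).
    + intros x Hx1 Hx2. rewrite <- Eu by (split; auto).
      unfold Lfun. destruct (in_dec _ _ _) as [Hi|Hi]; auto.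
      exfalso. apply Hno. exists (flR m x). split; auto.
      apply (cell_trap m gl lo hi (flR m x) x HG Hi Hx1 Hx2). apply flR_spec.
Qed.

Lemma walk m gl P : (forall lo hi, GoodSeg m gl lo hi -> affine_on (Lfun gl m) P lo hi) ->
  forall T lo, (forall a, lo = Some a -> In a (map dval (Sl m gl))) ->
  strictly_increasing (map dval T) ->
  (forall d, In d T -> In (dval d) (map dval (Sl m gl)) /\ sabove lo (dval d)) ->
  (forall y, In y (map dval (Sl m gl)) -> sabove lo y -> In y (map dval T)) ->
  condL (Lfun gl m) P lo T.
Proof.
  intros HA T. induction T as [|s T IH]; intros lo Hlo HSI HT1 HT2; simpl.
  - apply HA. split; [auto|split; [intros b [=]|split]].
    + intros y Hy [Hy1 _]. specialize (HT2 y Hy Hy1). simpl in HT2. auto.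
    + destruct lo; simpl; auto.
  - simpl in HSI. apply SI_cons in HSI. destruct HSI as [HS1 HS2].
    destruct (HT1 s (or_introl eq_refl)) as [Hs1 Hs2].
    split.
    + apply HA. split; [auto|split; [intros b [= <-]; auto|split]].
      * intros y Hy [Hy1 Hy2]. simpl in Hy2. specialize (HT2 y Hy Hy1). simpl in HT2.
        destruct HT2 as [E|E]; [lra|]. specialize (HS1 y E). lra.
      * destruct lo; simpl in *; auto.
    + apply IH; auto.
      * intros a [= <-]; auto.
      * intros d Hd. split; [apply HT1; right; auto|]. simpl. apply HS1. apply in_map; auto.
      * intros y Hy Hy1. simpl in Hy1. assert (sabove lo y) by (destruct lo; simpl in *; auto; lra).
        specialize (HT2 y Hy H). simpl in HT2. destruct HT2 as [E|E]; auto. lra.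
Qed.


Lemma flat_map_len {A B} (f : A -> list B) l k : (forall x, In x l -> (length (f x) <= k)%nat) ->
  (length (flat_map f l) <= length l * k)%nat.
Proof.
  induction l as [|x l IH]; simpl; intros H; [lia|]. rewrite length_app.
  pose proof (H x (or_introl eq_refl)).
  assert (length (flat_map f l) <= length l * k)%nat by (apply IH; intros; apply H; right; auto). lia.
Qed.

Lemma zlist_len v w : (length (zlist v w) <= 1)%nat.
Proof. unfold zlist. destruct (Req_dec_T _ _); simpl; lia. Qed.

Lemma Zs_len gl : (length (Zs gl) <= length (pool gl) * length (pool gl))%nat.
Proof.
  unfold Zs. apply flat_map_len. intros v _.
  eapply Nat.le_trans; [apply flat_map_len; intros; apply zlist_len|]. lia.
Qed.

Lemma cands_len m gl : (length (Sl m gl) <= 2 * length (pool gl) * length (pool gl))%nat.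
Proof.
  eapply Nat.le_trans; [apply isort_len|]. unfold cands.
  eapply Nat.le_trans; [apply (flat_map_len _ _ 2); intros; simpl; lia|].
  pose proof (Zs_len gl). lia.
Qed.

Lemma zbound gl B z : (forall v, In v (pool gl) -> PB B v) -> In z (Zs gl) -> Rabs z <= 2 ^ (3 * B + 1).
Proof.
  intros Hp Hz. unfold Zs in Hz. apply in_flat_map in Hz. destruct Hz as [v [Hv Hz]].
  apply in_flat_map in Hz. destruct Hz as [w [Hw Hz]]. unfold zlist in Hz.
  destruct (Req_dec_T _ _) as [E|E]; [destruct Hz|]. destruct Hz as [<-|[]].
  destruct (Hp v Hv) as [Av Bv]. destruct (Hp w Hw) as [Aw Bw].
  pose proof (Bnd_sep B _ _ Av Aw E) as Hsep.
  pose proof (Bnd_abs _ _ Bv). pose proof (Bnd_abs _ _ Bw).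
  pose proof (pow2_pos (2 * B)).
  assert (Hd : 0 < Rabs (dval (fst v) - dval (fst w))) by (eapply Rlt_le_trans; [apply Rinv_0_lt_compat; eauto|auto]).
  unfold Rdiv. rewrite Rabs_mult, Rabs_inv.
  assert (Hn : Rabs (dval (snd w) - dval (snd v)) <= 2 * 2 ^ B).
  { unfold Rminus. eapply Rle_trans; [apply Rabs_triang|]. rewrite Rabs_Ropp. lra. }
  assert (Hi : / Rabs (dval (fst v) - dval (fst w)) <= 2 ^ (2 * B)).
  { rewrite <- (Rinv_inv (2 ^ (2 * B))). apply Rinv_le_contravar; [apply Rinv_0_lt_compat; auto|auto]. }
  assert (E2 : 2 ^ (3 * B + 1) = 2 * 2 ^ B * 2 ^ (2 * B)).
  { replace (3 * B + 1)%nat with (S (B + 2 * B)) by lia. rewrite <- tech_pow_Rmult, pow_add. ring. }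
  rewrite E2.
  apply Rmult_le_compat; auto; [apply Rabs_pos|left; apply Rinv_0_lt_compat; auto].
Qed.

Lemma up_bound y : Rabs (IZR (up y - 1)) <= Rabs y + 1 /\ Rabs (IZR (up y)) <= Rabs y + 1.
Proof.
  destruct (archimed y). rewrite minus_IZR. split; split_Rabs; lra.
Qed.

Lemma Rabs_to_Z (n : Z) (B : nat) : Rabs (IZR n) <= 2 ^ B -> (Z.abs n <= 2 ^ Z.of_nat B)%Z.
Proof. intros H. apply le_IZR. rewrite abs_IZR, IZR_pow2. auto. Qed.

Lemma Sl_bnd m gl B : (forall v, In v (pool gl) -> PB B v) ->
  forall d, In d (Sl m gl) -> Bnd (3 * B + m + 2) d.
Proof.
  intros Hp d Hd. apply isort_in in Hd. unfold cands in Hd. apply in_flat_map in Hd.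
  destruct Hd as [z [Hz Hd]]. pose proof (zbound gl B z Hp Hz) as Hzb.
  pose proof (pow2_pos m).
  assert (Hy : Rabs (z * 2 ^ m) + 1 <= 2 ^ (3 * B + m + 2)).
  { rewrite Rabs_mult, (Rabs_right (2 ^ m)) by lra.
    assert (Rabs z * 2 ^ m <= 2 ^ (3 * B + 1) * 2 ^ m) by (apply Rmult_le_compat_r; lra).
    rewrite <- pow_add in H0.
    replace (3 * B + m + 2)%nat with (S (3 * B + 1 + m)) by lia. rewrite <- tech_pow_Rmult.
    assert (1 <= 2 ^ (3 * B + 1 + m)) by (apply pow_R1_Rle; lra). lra. }
  destruct (up_bound (z * 2 ^ m)) as [U1 U2].
  simpl in Hd. destruct Hd as [<-|[<-|[]]]; split; cbn [dnum dexp]; try lia; apply Rabs_to_Z.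
  - unfold flZ. lra.
  - unfold flZ. replace (up (z * 2 ^ m) - 1 + 1)%Z with (up (z * 2 ^ m)) by lia. lra.
Qed.

Lemma len_thr_le ts ps : (length ts <= pl_bitsize (PLRep ts ps))%nat.
Proof.
  unfold pl_bitsize; cbn [thr pcs].
  assert (length ts <= fold_right (fun t s => (bs_dy t + s)%nat) 0%nat ts)%nat.
  { induction ts; cbn [fold_right length]; [lia|]. unfold bs_dy at 1, bs_int. lia. }
  lia.
Qed.

Lemma thr_bs ts ps t : In t ts -> (bs_dy t <= pl_bitsize (PLRep ts ps))%nat.
Proof.
  unfold pl_bitsize; cbn [thr pcs]. intros H.
  assert (bs_dy t <= fold_right (fun t s => (bs_dy t + s)%nat) 0%nat ts)%nat.
  { induction ts; cbn [fold_right In] in *; [tauto|]. destruct H as [<-|H]; [lia|]. specialize (IHts H). lia. }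
  lia.
Qed.

Lemma pcs_bs ts ps p : In p ps -> (bs_dy (fst p) + bs_dy (snd p) <= pl_bitsize (PLRep ts ps))%nat.
Proof.
  unfold pl_bitsize; cbn [thr pcs]. intros H.
  assert (bs_dy (fst p) + bs_dy (snd p) <= fold_right (fun p s => (bs_dy (fst p) + bs_dy (snd p) + s)%nat) 0%nat ps)%nat.
  { induction ps; cbn [fold_right In] in *; [tauto|]. destruct H as [<-|H]; [lia|]. specialize (IHps H). lia. }
  lia.
Qed.

Lemma rpl_mono L s s' : (s <= s')%nat -> rpl_of_size L s -> rpl_of_size L s'.
Proof. intros H [r [A [B C]]]. exists r. split; [auto|split; [auto|lia]]. Qed.

Definition Fsize (s B1 m : nat) : nat :=
  ((3 * (18 * (s + 1) * (s + 1)) + 2) * (2 * (64 * (3 * (8 * B1 + 3) + m + 2) + 25) + 3))%nat.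

Theorem construct (f g : R -> R) (lam del : R) (s : nat) (Lm : dy) (B1 m : nat) :
  0 < lam -> 0 <= del -> lipschitz lam f -> eps_approx del f g -> rpl_of_size g s ->
  lam * (1 + del) <= dval Lm -> Bnd B1 Lm -> (s <= B1)%nat -> (m <= B1)%nat ->
  exists L, rpl_of_size L (Fsize s B1 m) /\ lipschitz (dval Lm) L /\
    forall x, Rabs (f x - L x) <= 3 * del * Rabs (f x) + 3 * del + 2 * dval Lm / 2 ^ m.
Proof.
  intros Hlam Hdel Hfl Hg [r [Hwf [Hr Hsz]]] HLm HB1 Hs1 Hm1.
  assert (HL0 : 0 <= dval Lm) by nra.
  set (E := fun x => 2 * del * Rabs (f x) + 2 * del).
  assert (HE : forall x, 0 <= E x) by (intros x; unfold E; pose proof (Rabs_pos (f x)); nra).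
  assert (HCI : CIprop g E (dval Lm)).
  { intros x y. unfold E. pose proof (Hg x) as Ax. pose proof (Hg y) as Ay. pose proof (Hfl x y) as Fxy.
    pose proof (Rabs_pos (x - y)).
    assert (Rabs (f y) <= Rabs (f x) + lam * Rabs (x - y)).
    { replace (f y) with (f x - (f x - f y)) by ring. eapply Rle_trans; [apply Rabs_triang|].
      rewrite Rabs_Ropp. lra. }
    assert (f x - f y <= lam * Rabs (x - y)) by (pose proof (Rle_abs (f x - f y)); lra).
    assert (lam * (1 + del) * Rabs (x - y) <= dval Lm * Rabs (x - y)) by (apply Rmult_le_compat_r; auto).
    assert (del * Rabs (f y) <= del * (Rabs (f x) + lam * Rabs (x - y))) by (apply Rmult_le_compat_l; auto).
    split_Rabs; nra. }
  destruct Hwf as [W1 [W2 [W3 [W4 W5]]]].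
  assert (Hl0 : (length (thr r) <= pl_bitsize r)%nat) by (destruct r; apply len_thr_le).
  set (ts := thr r) in *. set (ps := pcs r) in *.
  assert (Hts : Forall (Bnd B1) ts).
  { apply Forall_forall. intros t Ht. eapply Bnd_mono; [exact Hs1|]. apply Bnd_of_bs.
    destruct r as [ts0 ps0]. eapply Nat.le_trans; [apply (thr_bs ts0 ps0); auto|auto]. }
  assert (Hps : Forall (PB B1) ps).
  { apply Forall_forall. intros p Hp. destruct r as [ts0 ps0]. pose proof (pcs_bs ts0 ps0 p Hp).
    split; (eapply Bnd_mono; [exact Hs1|]); apply Bnd_of_bs; lia. }
  assert (Hlen : (length ps <= s + 1)%nat).
  { rewrite W1. lia. }
  set (gl := groups Lm None ts ps).
  assert (HInv : Inv g None ts ps).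
  { split; [|split; [auto|split; [intros l [=]|auto]]]. intros y _. rewrite Hr. reflexivity. }
  assert (Hgl_len : length gl = length ps) by (apply groups_len; auto).
  assert (Hne : gl <> []).
  { intros E0. rewrite E0 in Hgl_len. simpl in Hgl_len. rewrite W1 in Hgl_len. lia. }
  assert (Hslope : forall v, In v (pool gl) -> Rabs (dval (fst v)) <= dval Lm).
  { intros v Hv. unfold pool in Hv. apply in_flat_map in Hv. destruct Hv as [g0 [Hg0 Hv]].
    eapply groups_slope; eauto. }
  assert (Hpool : forall v, In v (pool gl) -> PB (8 * B1 + 3) v).
  { intros v Hv. unfold pool in Hv. apply in_flat_map in Hv. destruct Hv as [g0 [Hg0 Hv]].
    eapply groups_bnd; eauto. intros l [=]. }
  assert (Hplen : (length (pool gl) <= 3 * length ps)%nat).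
  { unfold pool. rewrite <- Hgl_len. rewrite Nat.mul_comm. apply flat_map_len.
    intros g0 Hg0. eapply groups_size; eauto. }
  set (H := Hf gl).
  assert (HHl : forall x y, Rabs (H x - H y) <= dval Lm * Rabs (x - y)) by (intros; apply Hf_lip; auto).
  assert (HH1 : forall x, H x <= g x).
  { intros x. destruct (groups_up g E Lm ts HL0 HCI HE None ps HInv x I) as [g0 [Hg0 Hle]].
    eapply Rle_trans; [apply Hf_le; eauto|auto]. }
  assert (HH2 : forall x, g x - E x <= H x).
  { intros x. unfold H. destruct (Hf_att gl x Hne) as [g0 [Hg0 ->]].
    eapply groups_low; eauto. }
  set (B2 := (8 * B1 + 3)%nat). set (B3 := (3 * B2 + m + 2)%nat).
  exists (Lfun gl m). split; [|split].
  - eapply rpl_mono; [|apply (rep_of (Lfun gl m) (Sl m gl) (64 * B3 + 25))].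
    + unfold Fsize. fold B2. fold B3. apply Nat.mul_le_mono_r.
      pose proof (cands_len m gl). assert (length (pool gl) <= 3 * (s + 1))%nat by lia.
      assert (length (pool gl) * length (pool gl) <= 3 * (s + 1) * (3 * (s + 1)))%nat by (apply Nat.mul_le_mono; lia).
      lia.
    + apply isort_SI.
    + apply Forall_forall. intros d Hd. eapply Bnd_mono; [|apply (Sl_bnd m gl B2 Hpool d Hd)]. unfold B3. lia.
    + apply (walk m gl).
      * intros lo hi HG. apply (seg_affine m gl B2 B3 lo hi Hne Hpool); auto.
        -- intros d Hd. apply (Sl_bnd m gl B2 Hpool d Hd).
        -- unfold B3; lia.
        -- unfold B3; lia.
      * intros a [=].
      * apply isort_SI.
      * intros d Hd. split; [apply in_map; auto|exact I].
      * intros y Hy _. auto.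
  - intros x y. apply L_lip. auto.
  - intros x. pose proof (L_approx gl m (dval Lm) HHl x). fold H in H0.
    pose proof (Hg x). pose proof (HH1 x). pose proof (HH2 x). unfold E in H3.
    replace (f x - Lfun gl m x) with ((f x - g x) + (g x - H x) + (H x - Lfun gl m x)) by ring.
    eapply Rle_trans; [apply Rabs_triang|].
    eapply Rle_trans; [apply Rplus_le_compat; [apply Rabs_triang|apply Rle_refl]|].
    rewrite (Rabs_right (g x - H x)) by lra. rewrite <- Rabs_Ropp in H0.
    replace (- (Lfun gl m x - H x)) with (H x - Lfun gl m x) in H0 by ring.
    lra.
Qed.

Lemma Fsize_bound s N K : INR (Fsize s (s + K + (N + K)) (N + K)) <= 2 ^ 19 * INR (s + N + K + 1) ^ 3.
Proof.
  unfold Fsize. set (T := (s + N + K + 1)%nat).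
  assert (P1 : (3 * (18 * (s + 1) * (s + 1)) + 2 <= 56 * T * T)%nat) by (unfold T; nia).
  assert (P2 : (2 * (64 * (3 * (8 * (s + K + (N + K)) + 3) + (N + K) + 2) + 25) + 3 <= 8 * 1000 * T)%nat) by (unfold T; lia).
  apply le_INR in P1. apply le_INR in P2. rewrite mult_INR.
  rewrite !mult_INR in P1, P2.
  assert (HT : 0 <= INR T) by apply pos_INR.
  assert (INR 56 = 56) by (simpl; lra). assert (INR 1000 = 1000).
  { rewrite INR_IZR_INZ. reflexivity. }
  assert (INR 8 = 8) by (simpl; lra).
  rewrite H in P1. rewrite H0, H1 in P2.
  pose proof (pos_INR (3 * (18 * (s + 1) * (s + 1)) + 2)).
  pose proof (pos_INR (2 * (64 * (3 * (8 * (s + K + (N + K)) + 3) + (N + K) + 2) + 25) + 3)).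
  assert (E19 : 2 ^ 19 = 524288) by (simpl; lra). rewrite E19.
  apply Rle_trans with (56 * INR T * INR T * (8 * 1000 * INR T)).
  - apply Rmult_le_compat; auto.
  - simpl. nra.
Qed.

Lemma pow2_ge n : INR n + 1 <= 2 ^ n.
Proof. induction n; [simpl; lra|]. rewrite S_INR. simpl. pose proof (pow2_pos n). pose proof (pos_INR n). lra. Qed.

Lemma INR_up r : 0 < r -> INR (Z.to_nat (up r)) = IZR (up r) /\ r < IZR (up r) <= r + 1.
Proof.
  intros Hr. destruct (archimed r) as [A B].
  assert (Hz : (0 < up r)%Z) by (apply lt_IZR; simpl; lra).
  split; [|lra]. rewrite INR_IZR_INZ, Z2Nat.id by lia. reflexivity.
Qed.

Theorem lemma6p9 (f : R -> R) (lam : R) :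
  0 < lam -> lipschitz lam f -> rpl_approximable f ->
  exists c k : nat, forall eps, 0 < eps ->
    exists (L : R -> R) (s : nat),
      rpl_of_size L s /\ INR s <= INR c * (1 + / eps) ^ k /\
      eps_approx eps f L /\ lipschitz ((1 + eps) * lam) L.
Proof.
  intros Hlam Hlip [c0 [k0 Happ]].
  set (K := Z.to_nat (up (8 * lam + 2 / lam + 1))).
  assert (HK : 8 * lam + 2 / lam + 1 <= 2 ^ K).
  { assert (0 < 2 / lam) by (apply Rdiv_lt_0_compat; lra).
    destruct (INR_up (8 * lam + 2 / lam + 1)) as [E1 [E2 E3]]; [lra|].
    pose proof (pow2_ge K). unfold K in *. lra. }
  set (A := (c0 * 6 ^ k0 + K + 2)%nat).
  exists (2 ^ 19 * A ^ 3 * 2 ^ (3 * k0 + 3))%nat, (3 * k0 + 3)%nat.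
  intros eps Heps.
  set (e := Rmin eps 1).
  assert (He : 0 < e <= 1) by (unfold e; split; [apply Rmin_glb_lt; lra|apply Rmin_r]).
  assert (Hee : e <= eps) by apply Rmin_l.
  set (del := e / 6).
  assert (Hdel : 0 < del) by (unfold del; lra).
  destruct (Happ del Hdel) as [g [s [_ [Hg [Hs Hga]]]]].
  set (N := Z.to_nat (up (/ e))).
  destruct (INR_up (/ e)) as [N1 [N2 N3]]; [apply Rinv_0_lt_compat; lra|].
  fold N in N1.
  set (m := (N + K)%nat).
  assert (Hm : / e * (8 * lam + 2 / lam + 1) <= 2 ^ m).
  { unfold m. rewrite pow_add. pose proof (pow2_ge N). pose proof (pow2_pos K).
    apply Rmult_le_compat; try lra. left; apply Rinv_0_lt_compat; lra.
    assert (0 < 2 / lam) by (apply Rdiv_lt_0_compat; lra). lra. }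
  pose proof (pow2_pos m) as Hpm.
  set (y := lam * (1 + del) * 2 ^ m).
  assert (Hy : 0 < y) by (unfold y; apply Rmult_lt_0_compat; [apply Rmult_lt_0_compat|]; lra).
  set (Lm := Dy (up y) m).
  destruct (archimed y) as [Y1 Y2].
  assert (HLm1 : lam * (1 + del) <= dval Lm).
  { unfold Lm, dval; cbn [dnum dexp]. apply Rmult_le_reg_r with (2 ^ m); auto.
    replace (IZR (up y) / 2 ^ m * 2 ^ m) with (IZR (up y)) by (field; lra). change (lam * (1 + del) * 2 ^ m) with y. lra. }
  assert (HLm2 : dval Lm <= lam * (1 + del) + / 2 ^ m).
  { unfold Lm, dval; cbn [dnum dexp]. apply Rmult_le_reg_r with (2 ^ m); auto.
    replace (IZR (up y) / 2 ^ m * 2 ^ m) with (IZR (up y)) by (field; lra).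
    rewrite Rmult_plus_distr_r, Rinv_l by lra.
    change (lam * (1 + del) * 2 ^ m) with y. lra. }
  assert (Hinv : / 2 ^ m <= e * lam / 2).
  { assert (0 < 2 / lam) by (apply Rdiv_lt_0_compat; lra).
    assert (/ e * (2 / lam) <= 2 ^ m).
    { eapply Rle_trans; [|exact Hm]. apply Rmult_le_compat_l; [left; apply Rinv_0_lt_compat; lra|lra]. }
    apply Rmult_le_reg_r with (2 ^ m); auto. rewrite Rinv_l by lra.
    apply Rmult_le_compat_l with (r := e * lam / 2) in H0; [|apply Rmult_le_pos; [apply Rmult_le_pos|]; lra].
    replace (e * lam / 2 * (/ e * (2 / lam))) with 1 in H0 by (field; lra). lra. }
  assert (Hinv2 : / 2 ^ m <= e / (8 * lam)).
  { assert (/ e * (8 * lam) <= 2 ^ m).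
    { eapply Rle_trans; [|exact Hm]. apply Rmult_le_compat_l; [left; apply Rinv_0_lt_compat; lra|].
      assert (0 < 2 / lam) by (apply Rdiv_lt_0_compat; lra). lra. }
    apply Rmult_le_reg_r with (2 ^ m); auto. rewrite Rinv_l by lra.
    apply Rmult_le_compat_l with (r := e / (8 * lam)) in H; [|apply Rmult_le_pos; [|left; apply Rinv_0_lt_compat]; lra].
    replace (e / (8 * lam) * (/ e * (8 * lam))) with 1 in H by (field; lra). lra. }
  assert (HBL : Bnd (K + m) Lm).
  { unfold Lm. split; cbn [dnum dexp]; [|lia].
    apply Rabs_to_Z. rewrite Rabs_right by lra.
    rewrite pow_add.
    assert (lam * (1 + del) <= 2 * lam) by (unfold del; nra).
    assert (y <= 2 * lam * 2 ^ m) by (unfold y; apply Rmult_le_compat_r; lra).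
    assert (1 <= 2 ^ m) by (apply pow_R1_Rle; lra).
    assert ((2 * lam + 1) * 2 ^ m <= 2 ^ K * 2 ^ m).
    { apply Rmult_le_compat_r; [lra|]. assert (0 < 2 / lam) by (apply Rdiv_lt_0_compat; lra). lra. }
    lra. }
  set (B1 := (s + K + m)%nat).
  destruct (construct f g lam del s Lm B1 m Hlam (Rlt_le _ _ Hdel) Hlip Hga Hg HLm1)
    as [L [HL1 [HL2 HL3]]].
  { eapply Bnd_mono; [|exact HBL]. unfold B1; lia. }
  { unfold B1; lia. }
  { unfold B1; lia. }
  exists L, (Fsize s B1 m). split; [auto|split; [|split]].
  -
    unfold B1, m. eapply Rle_trans; [apply Fsize_bound|].
    set (X := 1 + / eps). set (X' := 1 + / e).
    assert (HX : 1 <= X) by (unfold X; pose proof (Rinv_0_lt_compat _ Heps); lra).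
    assert (HX' : 1 <= X') by (unfold X'; pose proof (Rinv_0_lt_compat _ (proj1 He)); lra).
    assert (HXX : X' <= 2 * X).
    { unfold X, X', e. unfold Rmin. destruct (Rle_dec eps 1).
      - pose proof (Rinv_0_lt_compat _ Heps). lra.
      - rewrite Rinv_1. pose proof (Rinv_0_lt_compat _ Heps). lra. }
    assert (Hs' : INR s <= INR c0 * 6 ^ k0 * X' ^ k0).
    { eapply Rle_trans; [exact Hs|]. rewrite Rmult_assoc. apply Rmult_le_compat_l; [apply pos_INR|].
      rewrite <- Rpow_mult_distr. apply pow_incr. split.
      - pose proof (Rinv_0_lt_compat _ Hdel). lra.
      - unfold del, X'. unfold Rdiv. rewrite Rinv_mult, Rinv_inv. lra. }
    assert (HN : INR N <= X') by (unfold X'; lra).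
    assert (Hpk : forall j, (j <= k0 + 1)%nat -> X' ^ j <= X' ^ (k0 + 1)) by (intros; apply Rle_pow; auto).
    assert (HT : INR (s + N + K + 1) <= INR A * X' ^ (k0 + 1)).
    { unfold A. rewrite !plus_INR, !mult_INR, pow_INR. simpl (INR 1). simpl (INR 2). simpl (INR 6).
      pose proof (Hpk k0 ltac:(lia)). pose proof (Hpk 1%nat ltac:(lia)). pose proof (Hpk 0%nat ltac:(lia)).
      simpl in H0, H1. rewrite Rmult_1_r in H0.
      pose proof (pos_INR c0). pose proof (pos_INR K).
      assert (0 <= 6 ^ k0) by (apply pow_le; lra).
      assert (INR c0 * 6 ^ k0 * X' ^ k0 <= INR c0 * 6 ^ k0 * X' ^ (k0 + 1)) by (apply Rmult_le_compat_l; auto; apply Rmult_le_pos; auto).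
      assert (INR K <= INR K * X' ^ (k0 + 1)) by (rewrite <- (Rmult_1_r (INR K)) at 1; apply Rmult_le_compat_l; auto).
      replace (1 + 1 + 1 + 1 + 1 + 1) with 6 by ring.
      lra. }
    assert (HT3 : INR (s + N + K + 1) ^ 3 <= INR A ^ 3 * X' ^ (3 * k0 + 3)).
    { replace (3 * k0 + 3)%nat with ((k0 + 1) * 3)%nat by lia. rewrite pow_mult, <- Rpow_mult_distr.
      apply pow_incr. split; [apply pos_INR|auto]. }
    assert (HX3 : X' ^ (3 * k0 + 3) <= 2 ^ (3 * k0 + 3) * X ^ (3 * k0 + 3)).
    { rewrite <- Rpow_mult_distr. apply pow_incr. lra. }
    rewrite !mult_INR, !pow_INR. simpl (INR 2).
    pose proof (pow_le (INR A) 3 (pos_INR A)).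
    pose proof (pow_le X' (3 * k0 + 3) ltac:(lra)).
    pose proof (pow_le 2 (3 * k0 + 3) ltac:(lra)).
    pose proof (pow_le 2 19 ltac:(lra)).
    apply Rle_trans with (2 ^ 19 * (INR A ^ 3 * X' ^ (3 * k0 + 3))).
    + apply Rmult_le_compat_l; auto.
    + apply Rle_trans with (2 ^ 19 * (INR A ^ 3 * (2 ^ (3 * k0 + 3) * X ^ (3 * k0 + 3)))).
      * apply Rmult_le_compat_l; auto. apply Rmult_le_compat_l; auto.
      * right. replace (1 + 1) with 2 by ring. ring.
  -
    intros x. specialize (HL3 x).
    assert (Hl2 : dval Lm <= 2 * lam) by (unfold del in HLm2; nra).
    assert (2 * dval Lm / 2 ^ m <= e / 2).
    { unfold Rdiv. apply Rle_trans with (2 * (2 * lam) * (e / (8 * lam))).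
      - assert (0 < lam * (1 + del)) by (apply Rmult_lt_0_compat; unfold del; lra).
        apply Rmult_le_compat; [lra | left; apply Rinv_0_lt_compat; lra | lra | lra].
      - right. field. lra. }
    pose proof (Rabs_pos (f x)).
    assert (e * Rabs (f x) <= eps * Rabs (f x)) by (apply Rmult_le_compat_r; lra).
    unfold del in HL3. set (t := 2 * dval Lm / 2 ^ m) in *. set (a := Rabs (f x)) in *. nra.
  - intros x y0. specialize (HL2 x y0).
    eapply Rle_trans; [exact HL2|]. apply Rmult_le_compat_r; [apply Rabs_pos|].
    unfold del in HLm2. nra.
Qed.
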